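(* Let $P:(-\infty,\tfrac12)\to\mathbb{C}\cong\mathbb{R}^2$ be the log-aesthetic curve with shape parameter $\alpha=-1$ and $\Lambda=1$ (a clothoid), $P(\theta)=\int_0^\theta(1-2\psi)^{-1/2}e^{i\psi}\,d\psi$, and let $\delta=\tfrac{2\pi}{3}$. Let $I_\delta$ be its isoptic curve for the angle $\gamma=\pi-\delta=\pi/3$, parametrized for $\theta<\tfrac12-\delta$ by $$I_\delta(\theta)=P(\theta)+\csc(\delta)\Big(V_x(\theta)\sin(\theta+\delta)-V_y(\theta)\cos(\theta+\delta)\Big)(\cos\theta,\sin\theta)^T,$$ where $(V_x(\theta),V_y(\theta))^T$ is the vector $P(\theta+\delta)-P(\theta)$ (i.e. $I_\delta(\theta)$ is the intersection of the tangent lines of $P$ at $P(\theta)$ and $P(\theta+\delta)$). Then the logarithmic curvature graph of $I_\delta$ is not a straight line (its slope is not constant); hence the isoptic is not a log-aesthetic curve, and in particular the clothoid is not autoisoptic. Moreover, the slope of the logarithmic curvature graph of $I_\delta$ (measured between the points with parameters $\theta$ and $\theta-\pi$) tends to $-1$ as $\theta\to-\infty$.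
   Context: For a regular plane curve with radius of curvature $\rho$ and arc length $s$, the logarithmic curvature graph (LCG) is the curve traced by the points $\big(\log\rho,\ \log(\rho\,|ds/d\rho|)\big)$ along the curve. A log-aesthetic curve with shape parameter $\alpha$ is a curve whose LCG is a straight line of slope $\alpha$, i.e. $\log(\rho\, ds/d\rho)=\alpha\log\rho+c$ for a constant $c$. A curve is called autoisoptic if it coincides (up to similarity) with its isoptic curve. The isoptic curve for angle $\gamma\in(0,\pi)$ is the locus of points from which the curve is seen under angle $\gamma$ (intersection points of pairs of tangent lines meeting at angle $\gamma$). *)

(* Defs.v *)
From Stdlib Require Import Reals.
From Coquelicot Require Import Coquelicot.
Open Scope R_scope.

Definition delta : R := 2 * PI / 3.

Definition Px (t : R) : R := RInt (fun psi => cos psi / sqrt (1 - 2 * psi)) 0 t.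
Definition Py (t : R) : R := RInt (fun psi => sin psi / sqrt (1 - 2 * psi)) 0 t.

Definition Vx (t : R) : R := Px (t + delta) - Px t.
Definition Vy (t : R) : R := Py (t + delta) - Py t.

Definition kI (t : R) : R :=
  / sin delta * (Vx t * sin (t + delta) - Vy t * cos (t + delta)).

Definition Ix (t : R) : R := Px t + kI t * cos t.
Definition Iy (t : R) : R := Py t + kI t * sin t.

Definition speedI (t : R) : R :=
  sqrt (Derive Ix t ^ 2 + Derive Iy t ^ 2).
Definition crossI (t : R) : R :=
  Derive Ix t * Derive (Derive Iy) t - Derive Iy t * Derive (Derive Ix) t.
(* radius of curvature rho = 1/|kappa| = |I'|^3 / |I' x I''| *)
Definition rhoI (t : R) : R := speedI t ^ 3 / Rabs (crossI t).

(* Logarithmic curvature graph: (log rho, log (rho |ds/drho|)),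
   with ds/drho = (ds/dtheta)/(drho/dtheta). *)
Definition LCGx (t : R) : R := ln (rhoI t).
Definition LCGy (t : R) : R := ln (rhoI t * Rabs (speedI t / Derive rhoI t)).

Definition LCG_defined (t : R) : Prop :=
  t < / 2 - delta /\ 0 < speedI t /\ crossI t <> 0 /\ Derive rhoI t <> 0.

Definition LCG_slope (t : R) : R :=
  (LCGy t - LCGy (t - PI)) / (LCGx t - LCGx (t - PI)).

(* Main.v *)
Require Import Defs.
From Stdlib Require Import Reals Lra.
From Coquelicot Require Import Coquelicot.
Open Scope R_scope.


Definition sd := sin delta.
Definition cd := cos delta.
Lemma sd_val : sd = sqrt 3 / 2.
Proof. unfold sd, delta. rewrite <- sin_2PI3. f_equal. field. Qed.
Lemma cd_val : cd = - / 2.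
Proof. unfold cd, delta. replace (2*PI/3) with (PI - PI/3) by field.
  rewrite Rtrigo_facts.cos_pi_minus, cos_PI3. field. Qed.
Lemma sd2 : sd * sd = 3/4.
Proof. rewrite sd_val. assert (H := sqrt_sqrt 3). replace (sqrt 3 / 2 * (sqrt 3 / 2)) with (sqrt 3 * sqrt 3 / 4) by field. rewrite H; lra. Qed.
Lemma sd_pos : 0 < sd.
Proof. rewrite sd_val. assert (H := Rlt_sqrt3_0). lra. Qed.
Lemma sd_lt1 : sd < 1.
Proof. assert (H:=sd2). assert (H1 := sd_pos). nra. Qed.
Lemma delta_pos : 0 < delta.
Proof. unfold delta. assert (H:=PI_RGT_0). lra. Qed.

Definition uu (t : R) : R := / sqrt (1 - 2 * t).
Definition Hh (t : R) : R := sd * uu t ^ 2.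

Lemma uu_sq t : t < /2 -> uu t ^ 2 = / (1 - 2*t).
Proof. intro h. unfold uu. rewrite pow_inv. f_equal. simpl. rewrite Rmult_1_r.
  apply sqrt_sqrt. lra. Qed.
Lemma uu_pos t : t < /2 -> 0 < uu t.
Proof. intro h. unfold uu. apply Rinv_0_lt_compat, sqrt_lt_R0. lra. Qed.
Lemma Hh_eq t : t < /2 -> Hh t = sd / (1 - 2*t).
Proof. intro h. unfold Hh. rewrite uu_sq by lra. field. lra. Qed.
Lemma Hh_pos t : t < /2 -> 0 < Hh t.
Proof. intro h. rewrite Hh_eq by lra. apply Rdiv_lt_0_compat. apply sd_pos. lra. Qed.
Lemma Hh_le1 t : t < 0 -> Hh t <= 1.
Proof. intro h. rewrite Hh_eq by lra. assert (H:=sd_lt1). assert (H2:=sd_pos).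
  apply Rmult_le_reg_r with (1 - 2*t). lra. field_simplify; lra. Qed.
Lemma Hh_small eps T : 0 < eps -> exists t, t < T /\ t < 0 /\ Hh t < eps.
Proof. intro he. exists (Rmin (T - 1) (- / eps - 1)). 
  assert (h1 := Rmin_l (T-1) (- / eps - 1)). assert (h2 := Rmin_r (T-1) (- / eps - 1)).
  assert (Hie : 0 < / eps) by (apply Rinv_0_lt_compat; lra).
  split; [lra|split; [lra|]]. set (t := Rmin _ _) in *.
  rewrite Hh_eq by lra. assert (Hs1:=sd_lt1). assert (Hs2:=sd_pos).
  apply Rmult_lt_reg_r with (1 - 2*t). lra. unfold Rdiv. rewrite Rmult_assoc, Rinv_l by lra.
  assert (Hx : eps * (1 - 2*t) >= eps * (1 + 2 * / eps)). { apply Rmult_ge_compat_l; lra. }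
  assert (Hy : eps * (1 + 2 * / eps) = eps + 2) by (field; lra). lra. Qed.

Definition Bnd (f : R -> R) := exists M T, forall t, t < T -> Rabs (f t) <= M.
Lemma Bnd_const c : Bnd (fun _ => c).
Proof. exists (Rabs c), 0. intros; lra. Qed.
Lemma Bnd_plus f g : Bnd f -> Bnd g -> Bnd (fun t => f t + g t).
Proof. intros [M1 [T1 H1]] [M2 [T2 H2]]. exists (M1+M2), (Rmin T1 T2). intros t ht.
  assert (t < T1) by (eapply Rlt_le_trans; [apply ht| apply Rmin_l]).
  assert (t < T2) by (eapply Rlt_le_trans; [apply ht| apply Rmin_r]).
  eapply Rle_trans. apply Rabs_triang. specialize (H1 t H). specialize (H2 t H0). lra. Qed.
Lemma Bnd_opp f : Bnd f -> Bnd (fun t => - f t).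
Proof. intros [M1 [T1 H1]]. exists M1, T1. intros t ht. rewrite Rabs_Ropp. auto. Qed.
Lemma Bnd_minus f g : Bnd f -> Bnd g -> Bnd (fun t => f t - g t).
Proof. intros. apply (Bnd_plus f (fun t => - g t)); auto. apply Bnd_opp; auto. Qed.
Lemma Bnd_mult f g : Bnd f -> Bnd g -> Bnd (fun t => f t * g t).
Proof. intros [M1 [T1 H1]] [M2 [T2 H2]]. exists (M1*M2), (Rmin T1 T2). intros t ht.
  assert (t < T1) by (eapply Rlt_le_trans; [apply ht| apply Rmin_l]).
  assert (t < T2) by (eapply Rlt_le_trans; [apply ht| apply Rmin_r]).
  rewrite Rabs_mult. specialize (H1 t H). specialize (H2 t H0).
  apply Rmult_le_compat; auto using Rabs_pos. Qed.
Lemma Bnd_pow f n : Bnd f -> Bnd (fun t => f t ^ n).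
Proof. intro h. induction n. simpl. apply Bnd_const. simpl. apply (Bnd_mult f (fun t => f t ^ n)); auto. Qed.
Lemma Bnd_H : Bnd Hh.
Proof. exists 1, 0. intros t ht. rewrite Rabs_right. apply Hh_le1; auto.
  left. apply Hh_pos; lra. Qed.
Lemma Bnd_loc f g T : Bnd f -> (forall t, t < T -> g t = f t) -> Bnd g.
Proof. intros [M1 [T1 H1]] E. exists M1, (Rmin T1 T).  intros t ht.
  assert (t < T1) by (eapply Rlt_le_trans; [apply ht| apply Rmin_l]).
  assert (t < T) by (eapply Rlt_le_trans; [apply ht| apply Rmin_r]).
  rewrite E; auto. Qed.

Ltac bnd :=
  lazymatch goal with
  | |- Bnd (fun t => @?A t + @?B t) => apply (Bnd_plus A B); bnd
  | |- Bnd (fun t => @?A t - @?B t) => apply (Bnd_minus A B); bnd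
  | |- Bnd (fun t => @?A t * @?B t) => apply (Bnd_mult A B); bnd
  | |- Bnd (fun t => - @?A t) => apply (Bnd_opp A); bnd
  | |- Bnd (fun t => @?A t ^ ?n) => apply (Bnd_pow A n); bnd
  | |- Bnd (fun t => Hh t) => apply Bnd_H
  | |- Bnd _ => first [apply Bnd_const | eassumption | idtac]
  end.

Definition E4 (Q : R -> R) (a b c d : R) :=
  exists e, Bnd e /\ exists T, forall t, t < T ->
    Q t = a + b * Hh t + c * Hh t ^ 2 + d * Hh t ^ 3 + Hh t ^ 4 * e t.

Lemma E4_ext Q a b c d a' b' c' d' : E4 Q a b c d -> a = a' -> b = b' -> c = c' -> d = d' ->
  E4 Q a' b' c' d'.
Proof. intros; subst; auto. Qed.
Lemma E4_const c : E4 (fun _ => c) c 0 0 0.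
Proof. exists (fun _ => 0). split. apply Bnd_const. exists 0. intros; ring. Qed.
Lemma E4_H : E4 Hh 0 1 0 0.
Proof. exists (fun _ => 0). split. apply Bnd_const. exists 0. intros; ring. Qed.
Lemma E4_add P Q a b c d a' b' c' d' : E4 P a b c d -> E4 Q a' b' c' d' ->
  E4 (fun t => P t + Q t) (a+a') (b+b') (c+c') (d+d').
Proof. intros [e1 [B1 [T1 H1]]] [e2 [B2 [T2 H2]]]. exists (fun t => e1 t + e2 t). split. bnd.
  exists (Rmin T1 T2). intros t ht.
  assert (t < T1) by (eapply Rlt_le_trans; [apply ht| apply Rmin_l]).
  assert (t < T2) by (eapply Rlt_le_trans; [apply ht| apply Rmin_r]).
  rewrite H1, H2 by auto. ring. Qed.
Lemma E4_opp P a b c d : E4 P a b c d -> E4 (fun t => - P t) (-a) (-b) (-c) (-d).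
Proof. intros [e1 [B1 [T1 H1]]]. exists (fun t => - e1 t). split. bnd.
  exists T1. intros t ht. rewrite H1 by auto. ring. Qed.
Lemma E4_sub P Q a b c d a' b' c' d' : E4 P a b c d -> E4 Q a' b' c' d' ->
  E4 (fun t => P t - Q t) (a-a') (b-b') (c-c') (d-d').
Proof. intros. apply (E4_add P (fun t => - Q t) a b c d (-a') (-b') (-c') (-d')); auto.
  apply E4_opp; auto. Qed.
Lemma E4_mul P Q a1 b1 c1 d1 a2 b2 c2 d2 : E4 P a1 b1 c1 d1 -> E4 Q a2 b2 c2 d2 ->
  E4 (fun t => P t * Q t) (a1*a2) (a1*b2+b1*a2) (a1*c2+b1*b2+c1*a2) (a1*d2+b1*c2+c1*b2+d1*a2).
Proof. intros [e1 [B1 [T1 H1]]] [e2 [B2 [T2 H2]]].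
  exists (fun t => (b1*d2+c1*c2+d1*b2) + (c1*d2+d1*c2)*Hh t + d1*d2*Hh t^2
     + e1 t * (a2 + b2*Hh t + c2*Hh t^2 + d2*Hh t^3)
     + e2 t * (a1 + b1*Hh t + c1*Hh t^2 + d1*Hh t^3) + Hh t^4 * e1 t * e2 t).
  split. bnd.
  exists (Rmin T1 T2). intros t ht.
  assert (t < T1) by (eapply Rlt_le_trans; [apply ht| apply Rmin_l]).
  assert (t < T2) by (eapply Rlt_le_trans; [apply ht| apply Rmin_r]).
  rewrite H1, H2 by auto. ring. Qed.
Lemma E4_perturb P Q e a b c d T : E4 P a b c d -> Bnd e ->
  (forall t, t < T -> Q t = P t + Hh t ^ 4 * e t) -> E4 Q a b c d.
Proof. intros [e1 [B1 [T1 H1]]] Be E. exists (fun t => e1 t + e t). split. bnd.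
  exists (Rmin T1 T). intros t ht.
  assert (t < T1) by (eapply Rlt_le_trans; [apply ht| apply Rmin_l]).
  assert (t < T) by (eapply Rlt_le_trans; [apply ht| apply Rmin_r]).
  rewrite E, H1 by auto. ring. Qed.

Ltac e4d :=
  lazymatch goal with
  | |- E4 (fun t => @?A t + @?B t) _ _ _ _ => eapply (E4_add A B); e4d
  | |- E4 (fun t => @?A t - @?B t) _ _ _ _ => eapply (E4_sub A B); e4d
  | |- E4 (fun t => @?A t * @?B t) _ _ _ _ => eapply (E4_mul A B); e4d
  | |- E4 (fun t => - @?A t) _ _ _ _ => eapply (E4_opp A); e4d
  | |- E4 (fun t => Hh t) _ _ _ _ => apply E4_H
  | |- E4 _ _ _ _ _ => first [apply E4_const | eassumption]
  end.
Ltac e4 := eapply E4_ext; [e4d | field | field | field | field].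



Lemma locally_lt a t : t < a -> locally t (fun y => y < a).
Proof. intro h. assert (hp : 0 < a - t) by lra. exists (mkposreal _ hp).
  intros y Hy. unfold ball in Hy; simpl in Hy; unfold AbsRing_ball in Hy;
  unfold abs, minus, plus, opp in Hy; simpl in Hy.
  destruct (Rabs_def2 _ _ Hy). lra. Qed.

Lemma uu_deriv t : t < /2 -> is_derive uu t (uu t ^ 3).
Proof. intro h. unfold uu. auto_derive.
  - assert (0 < sqrt (1 + - (2*t))) by (apply sqrt_lt_R0; lra). repeat split; lra.
  - replace (1 + - (2*t)) with (1 - 2*t) by ring.
    assert (hs : 0 < sqrt (1 - 2*t)) by (apply sqrt_lt_R0; lra).
    field. lra. Qed.

Definition fx (psi : R) := cos psi / sqrt (1 - 2 * psi).
Definition fy (psi : R) := sin psi / sqrt (1 - 2 * psi).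

Lemma fx_cont z : z < /2 -> continuous fx z.
Proof. intro h. apply (@ex_derive_continuous R_AbsRing R_NormedModule fx z). unfold fx. auto_derive.
  assert (0 < sqrt (1 + - (2*z))) by (apply sqrt_lt_R0; lra). repeat split; lra. Qed.
Lemma fy_cont z : z < /2 -> continuous fy z.
Proof. intro h. apply (@ex_derive_continuous R_AbsRing R_NormedModule fy z). unfold fy. auto_derive.
  assert (0 < sqrt (1 + - (2*z))) by (apply sqrt_lt_R0; lra). repeat split; lra. Qed.

Lemma fx_exRInt a b : a < /2 -> b < /2 -> ex_RInt fx a b.
Proof. intros. apply (@ex_RInt_continuous R_CompleteNormedModule). intros z hz. apply fx_cont.
  destruct hz as [_ hz]. eapply Rle_lt_trans. apply hz. apply Rmax_lub_lt; auto. Qed.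
Lemma fy_exRInt a b : a < /2 -> b < /2 -> ex_RInt fy a b.
Proof. intros. apply (@ex_RInt_continuous R_CompleteNormedModule). intros z hz. apply fy_cont.
  destruct hz as [_ hz]. eapply Rle_lt_trans. apply hz. apply Rmax_lub_lt; auto. Qed.

Lemma Px_deriv t : t < /2 -> is_derive Px t (cos t * uu t).
Proof. intro h. replace (cos t * uu t) with (fx t) by reflexivity.
  apply (is_derive_RInt fx Px 0 t).
  - generalize (locally_lt (/2) t h). apply filter_imp. intros y hy.
    unfold Px. apply (RInt_correct fx). apply fx_exRInt; lra.
  - apply fx_cont; auto. Qed.
Lemma Py_deriv t : t < /2 -> is_derive Py t (sin t * uu t).
Proof. intro h. replace (sin t * uu t) with (fy t) by reflexivity.
  apply (is_derive_RInt fy Py 0 t).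
  - generalize (locally_lt (/2) t h). apply filter_imp. intros y hy.
    unfold Py. apply (RInt_correct fy). apply fy_exRInt; lra.
  - apply fy_cont; auto. Qed.

Definition T0 := /2 - delta.
Definition vv t := uu (t + delta).

Lemma vv_deriv t : t < T0 -> is_derive vv t (vv t ^ 3).
Proof. intro h. unfold T0 in h. unfold vv.
  assert (H1 := uu_deriv (t + delta) ltac:(lra)).
  assert (H2 : is_derive (fun x => x + delta) t 1).
  { auto_derive; auto; ring. }
  assert (H3 := is_derive_comp uu (fun x => x + delta) t _ _ H1 H2). simpl in H3.
  unfold scal in H3; simpl in H3; unfold mult in H3; simpl in H3.
  rewrite Rmult_1_l in H3. exact H3. Qed.

Lemma Vx_deriv t : t < T0 -> is_derive Vx t (cos (t+delta) * vv t - cos t * uu t).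
Proof. intro h. unfold T0 in h. assert (dp := delta_pos). unfold Vx.
  assert (H1 := Px_deriv (t + delta) ltac:(lra)).
  assert (H2 : is_derive (fun x => x + delta) t 1). { auto_derive; auto; ring. }
  assert (H3 := is_derive_comp Px (fun x => x + delta) t _ _ H1 H2). simpl in H3.
  unfold scal in H3; simpl in H3; unfold mult in H3; simpl in H3.
  rewrite Rmult_1_l in H3.
  apply (is_derive_minus (fun x => Px (x + delta)) Px). exact H3. apply Px_deriv; lra. Qed.
Lemma Vy_deriv t : t < T0 -> is_derive Vy t (sin (t+delta) * vv t - sin t * uu t).
Proof. intro h. unfold T0 in h. assert (dp := delta_pos). unfold Vy.
  assert (H1 := Py_deriv (t + delta) ltac:(lra)).
  assert (H2 : is_derive (fun x => x + delta) t 1). { auto_derive; auto; ring. }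
  assert (H3 := is_derive_comp Py (fun x => x + delta) t _ _ H1 H2). simpl in H3.
  unfold scal in H3; simpl in H3; unfold mult in H3; simpl in H3.
  rewrite Rmult_1_l in H3.
  apply (is_derive_minus (fun x => Py (x + delta)) Py). exact H3. apply Py_deriv; lra. Qed.

Definition kf := kI.
Definition Af t := / sd * (Vx t * cos (t + delta) + Vy t * sin (t + delta)).
Definition kd1 t := Af t - uu t.
Definition Ad1 t := (vv t - cd * uu t) / sd - kf t.
Definition kd2 t := Ad1 t - uu t ^ 3.
Definition Ad2 t := (vv t ^ 3 - cd * uu t ^ 3) / sd - kd1 t.

Lemma trig3 x : sin x ^ 2 + cos x ^ 2 = 1.
Proof. rewrite <- (sin2_cos2 x). unfold Rsqr. ring. Qed.
Lemma trig1 t : cos t * sin (t + delta) - sin t * cos (t + delta) = sd.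
Proof. rewrite sin_plus, cos_plus. unfold sd.
  replace (cos t * (sin t * cos delta + cos t * sin delta) - sin t * (cos t * cos delta - sin t * sin delta))
    with (sin delta * (sin t ^ 2 + cos t ^ 2)) by ring. rewrite trig3. ring. Qed.
Lemma trig2 t : cos t * cos (t + delta) + sin t * sin (t + delta) = cd.
Proof. rewrite sin_plus, cos_plus. unfold cd.
  replace (cos t * (cos t * cos delta - sin t * sin delta) + sin t * (sin t * cos delta + cos t * sin delta))
    with (cos delta * (sin t ^ 2 + cos t ^ 2)) by ring. rewrite trig3. ring. Qed.

Lemma sd_neq : sd <> 0.
Proof. assert (h:=sd_pos). lra. Qed.

Lemma lc1 L R P Q l : P = Q -> L - R = l * (P - Q) -> L = R.
Proof. intros h1 h2. rewrite h1 in h2. lra. Qed.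

Lemma kf_deriv t : t < T0 -> is_derive kf t (kd1 t).
Proof. intro h. assert (hx := Vx_deriv t h). assert (hy := Vy_deriv t h).
  unfold kf, kI. fold sd. auto_derive. { split; [exists (cos (t + delta) * vv t - cos t * uu t); exact hx|].
    split; [exists (sin (t + delta) * vv t - sin t * uu t); exact hy|]. auto. }
  replace (Derive (fun x => Vx x) t) with (cos (t + delta) * vv t - cos t * uu t)
    by (symmetry; apply is_derive_unique; exact hx).
  replace (Derive (fun x => Vy x) t) with (sin (t + delta) * vv t - sin t * uu t)
    by (symmetry; apply is_derive_unique; exact hy).
  unfold kd1, Af. assert (ht := trig1 t). assert (hs := sd_neq).
  apply (lc1 _ _ _ _ (- uu t / sd) ht). field_simplify; try ring; auto. Qed.

Lemma Af_deriv t : t < T0 -> is_derive Af t (Ad1 t).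
Proof. intro h. assert (hx := Vx_deriv t h). assert (hy := Vy_deriv t h).
  unfold Af. auto_derive. { split; [exists (cos (t + delta) * vv t - cos t * uu t); exact hx|].
    split; [exists (sin (t + delta) * vv t - sin t * uu t); exact hy|]. auto. }
  replace (Derive (fun x => Vx x) t) with (cos (t + delta) * vv t - cos t * uu t)
    by (symmetry; apply is_derive_unique; exact hx).
  replace (Derive (fun x => Vy x) t) with (sin (t + delta) * vv t - sin t * uu t)
    by (symmetry; apply is_derive_unique; exact hy).
  unfold Ad1, kf, kI. fold sd. assert (ht := trig2 t). assert (hs := sd_neq).
  assert (h3 := trig3 (t + delta)).
  apply (lc1 _ _ _ _ (- uu t / sd) ht). 
  apply (lc1 _ _ _ _ (vv t / sd) h3). field_simplify; try ring; auto. Qed.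


Ltac rD f l H := replace (Derive (fun x => f x) _) with l by (symmetry; apply is_derive_unique; exact H).
Ltac exd H := eexists; exact H.

Lemma k1_deriv t : t < T0 -> is_derive kd1 t (kd2 t).
Proof. intro h. unfold kd1, kd2. apply (is_derive_minus Af uu). apply Af_deriv; auto.
  apply uu_deriv. unfold T0 in h. assert (dp := delta_pos). lra. Qed.

Lemma A1_deriv t : t < T0 -> is_derive Ad1 t (Ad2 t).
Proof. intro h. assert (hu := uu_deriv t ltac:(unfold T0 in h; assert (dp := delta_pos); lra)).
  assert (hv := vv_deriv t h). assert (hk := kf_deriv t h).
  unfold Ad1. auto_derive. { repeat split; try (exd hu); try (exd hv); try (exd hk); try apply sd_neq. }
  rD uu (uu t ^ 3) hu. rD vv (vv t ^ 3) hv. rD kf (kd1 t) hk.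
  unfold Ad2. assert (hs := sd_neq). field_simplify; try ring; auto. Qed.

Definition PP2 t := Ad1 t - kf t.
Definition QQ2 t := Af t + kd1 t.
Definition D1x t := Af t * cos t - kf t * sin t.
Definition D1y t := Af t * sin t + kf t * cos t.
Definition D2x t := PP2 t * cos t - QQ2 t * sin t.
Definition D2y t := PP2 t * sin t + QQ2 t * cos t.

Lemma rotx_deriv P Q dP dQ t : is_derive P t dP -> is_derive Q t dQ ->
  is_derive (fun t => P t * cos t - Q t * sin t) t ((dP - Q t) * cos t - (dQ + P t) * sin t).
Proof. intros h1 h2. auto_derive. repeat split; try exd h1; try exd h2.
  rD P dP h1. rD Q dQ h2. ring. Qed.
Lemma roty_deriv P Q dP dQ t : is_derive P t dP -> is_derive Q t dQ ->
  is_derive (fun t => P t * sin t + Q t * cos t) t ((dP - Q t) * sin t + (dQ + P t) * cos t).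
Proof. intros h1 h2. auto_derive. repeat split; try exd h1; try exd h2.
  rD P dP h1. rD Q dQ h2. ring. Qed.

Lemma Ix_deriv t : t < T0 -> is_derive Ix t (D1x t).
Proof. intro h. assert (hp := Px_deriv t ltac:(unfold T0 in h; assert (dp := delta_pos); lra)).
  assert (hk := kf_deriv t h). unfold Ix. fold kf. auto_derive. repeat split; try exd hp; try exd hk.
  rD Px (cos t * uu t) hp. rD kf (kd1 t) hk. unfold D1x, kd1. ring. Qed.
Lemma Iy_deriv t : t < T0 -> is_derive Iy t (D1y t).
Proof. intro h. assert (hp := Py_deriv t ltac:(unfold T0 in h; assert (dp := delta_pos); lra)).
  assert (hk := kf_deriv t h). unfold Iy. fold kf. auto_derive. repeat split; try exd hp; try exd hk.
  rD Py (sin t * uu t) hp. rD kf (kd1 t) hk. unfold D1y, kd1. ring. Qed.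

Lemma DIx_eq t : t < T0 -> Derive Ix t = D1x t.
Proof. intro h. apply is_derive_unique, Ix_deriv; auto. Qed.
Lemma DIy_eq t : t < T0 -> Derive Iy t = D1y t.
Proof. intro h. apply is_derive_unique, Iy_deriv; auto. Qed.

Lemma D1x_deriv t : t < T0 -> is_derive D1x t (D2x t).
Proof. intro h. assert (H := rotx_deriv Af kf _ _ t (Af_deriv t h) (kf_deriv t h)).
  unfold D2x, PP2, QQ2. replace (Ad1 t - kf t) with (Ad1 t - kf t) in H by ring.
  replace ((Ad1 t - kf t) * cos t - (Af t + kd1 t) * sin t) with ((Ad1 t - kf t) * cos t - (kd1 t + Af t) * sin t) by ring.
  exact H. Qed.
Lemma D1y_deriv t : t < T0 -> is_derive D1y t (D2y t).
Proof. intro h. assert (H := roty_deriv Af kf _ _ t (Af_deriv t h) (kf_deriv t h)).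
  unfold D2y, PP2, QQ2.
  replace ((Ad1 t - kf t) * sin t + (Af t + kd1 t) * cos t) with ((Ad1 t - kf t) * sin t + (kd1 t + Af t) * cos t) by ring.
  exact H. Qed.

Lemma DDIx_eq t : t < T0 -> Derive (Derive Ix) t = D2x t.
Proof. intro h. rewrite (Derive_ext_loc (Derive Ix) D1x).
  apply is_derive_unique, D1x_deriv; auto.
  generalize (locally_lt T0 t h). apply filter_imp. intros y hy. apply DIx_eq; auto. Qed.
Lemma DDIy_eq t : t < T0 -> Derive (Derive Iy) t = D2y t.
Proof. intro h. rewrite (Derive_ext_loc (Derive Iy) D1y).
  apply is_derive_unique, D1y_deriv; auto.
  generalize (locally_lt T0 t h). apply filter_imp. intros y hy. apply DIy_eq; auto. Qed.

Definition Sf t := Af t ^ 2 + kf t ^ 2.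
Definition Cf t := Af t * QQ2 t - kf t * PP2 t.
Definition Sd t := 2 * (Af t * Ad1 t + kf t * kd1 t).
Definition Cd t := Af t * kd2 t - kf t * Ad2 t + Sd t.
Definition Df t := 3/2 * Sd t * Cf t - Sf t * Cd t.

Lemma speed_eq t : t < T0 -> speedI t = sqrt (Sf t).
Proof. intro h. unfold speedI. rewrite DIx_eq, DIy_eq by auto. f_equal.
  unfold D1x, D1y, Sf. assert (h3 := trig3 t).
  apply (lc1 _ _ _ _ (Af t ^2 + kf t ^2) h3). ring. Qed.
Lemma cross_eq t : t < T0 -> crossI t = Cf t.
Proof. intro h. unfold crossI. rewrite DIx_eq, DIy_eq, DDIx_eq, DDIy_eq by auto.
  unfold D1x, D1y, D2x, D2y, Cf. assert (h3 := trig3 t).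
  apply (lc1 _ _ _ _ (Af t * QQ2 t - kf t * PP2 t) h3). ring. Qed.

Lemma Sf_deriv t : t < T0 -> is_derive Sf t (Sd t).
Proof. intro h. assert (h1 := Af_deriv t h). assert (h2 := kf_deriv t h).
  unfold Sf. auto_derive. repeat split; try exd h1; try exd h2.
  rD Af (Ad1 t) h1. rD kf (kd1 t) h2. unfold Sd. ring. Qed.
Lemma Cf_deriv t : t < T0 -> is_derive Cf t (Cd t).
Proof. intro h. assert (h1 := Af_deriv t h). assert (h2 := kf_deriv t h).
  assert (h3 := A1_deriv t h). assert (h4 := k1_deriv t h).
  unfold Cf, QQ2, PP2. auto_derive. repeat split; try exd h1; try exd h2; try exd h3; try exd h4.
  rD Af (Ad1 t) h1. rD kf (kd1 t) h2. rD Ad1 (Ad2 t) h3. rD kd1 (kd2 t) h4. unfold Cd, Sd. ring. Qed.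

Lemma rho_eq t : t < T0 -> rhoI t = sqrt (Sf t) ^ 3 / Rabs (Cf t).
Proof. intro h. unfold rhoI. rewrite speed_eq, cross_eq by auto. reflexivity. Qed.

Lemma rho_deriv T1 t : T1 <= T0 -> (forall y, y < T1 -> 0 < Cf y /\ 0 < Sf y) -> t < T1 ->
  Derive rhoI t = sqrt (Sf t) * Df t / Cf t ^ 2.
Proof. intros hT hpos ht. 
  rewrite (Derive_ext_loc rhoI (fun y => sqrt (Sf y) ^ 3 / Cf y)).
  - assert (h1 := Sf_deriv t ltac:(lra)). assert (h2 := Cf_deriv t ltac:(lra)).
    destruct (hpos t ht) as [hc hs].
    apply is_derive_unique. auto_derive.
    { repeat split; try exd h1; try exd h2; lra. }
    rD Sf (Sd t) h1. rD Cf (Cd t) h2. unfold Df.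
    assert (hq : 0 < sqrt (Sf t)) by (apply sqrt_lt_R0; auto).
    assert (hq2 := sqrt_sqrt (Sf t) ltac:(lra)).
    set (q := sqrt (Sf t)) in *. rewrite <- hq2.
    field_simplify; try ring; lra.
  - generalize (locally_lt T1 t ht). apply filter_imp. intros y hy.
    rewrite rho_eq by lra. destruct (hpos y hy). rewrite Rabs_right by lra. reflexivity. Qed.


Definition Gx p := uu p * sin p + uu p ^ 3 * cos p - 3 * uu p ^ 5 * sin p - 15 * uu p ^ 7 * cos p.
Definition Gy p := - uu p * cos p + uu p ^ 3 * sin p + 3 * uu p ^ 5 * cos p - 15 * uu p ^ 7 * sin p.
Definition gx p := uu p * cos p - 105 * uu p ^ 9 * cos p.
Definition gy p := uu p * sin p - 105 * uu p ^ 9 * sin p.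
Definition rx p := 105 * uu p ^ 9 * cos p.
Definition ry p := 105 * uu p ^ 9 * sin p.

Lemma Gx_deriv p : p < /2 -> is_derive Gx p (gx p).
Proof. intro h. assert (hu := uu_deriv p h). unfold Gx. auto_derive. repeat split; exd hu.
  rD uu (uu p ^ 3) hu. unfold gx. ring. Qed.
Lemma Gy_deriv p : p < /2 -> is_derive Gy p (gy p).
Proof. intro h. assert (hu := uu_deriv p h). unfold Gy. auto_derive. repeat split; exd hu.
  rD uu (uu p ^ 3) hu. unfold gy. ring. Qed.

Lemma uu_cont p : p < /2 -> continuous uu p.
Proof. intro h. apply (@ex_derive_continuous R_AbsRing R_NormedModule uu p). exd (uu_deriv p h). Qed.

Lemma gx_cont p : p < /2 -> continuous gx p.
Proof. intro h. apply (@ex_derive_continuous R_AbsRing R_NormedModule gx p).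
  assert (hu := uu_deriv p h). unfold gx. auto_derive. repeat split; exd hu. Qed.
Lemma gy_cont p : p < /2 -> continuous gy p.
Proof. intro h. apply (@ex_derive_continuous R_AbsRing R_NormedModule gy p).
  assert (hu := uu_deriv p h). unfold gy. auto_derive. repeat split; exd hu. Qed.
Lemma rx_cont p : p < /2 -> continuous rx p.
Proof. intro h. apply (@ex_derive_continuous R_AbsRing R_NormedModule rx p).
  assert (hu := uu_deriv p h). unfold rx. auto_derive. repeat split; exd hu. Qed.
Lemma ry_cont p : p < /2 -> continuous ry p.
Proof. intro h. apply (@ex_derive_continuous R_AbsRing R_NormedModule ry p).
  assert (hu := uu_deriv p h). unfold ry. auto_derive. repeat split; exd hu. Qed.

Lemma uu_mono a b : a <= b -> b < /2 -> uu a <= uu b.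
Proof. intros h1 h2. unfold uu. apply Rinv_le_contravar. apply sqrt_lt_R0; lra.
  apply sqrt_le_1_alt. lra. Qed.

Lemma Vx_split t : t < T0 -> Vx t = Gx (t + delta) - Gx t + RInt rx t (t + delta).
Proof. intro h. unfold T0 in h. assert (dp := delta_pos).
  assert (E1 : Vx t = RInt fx t (t + delta)).
  { unfold Vx, Px. fold fx. rewrite <- (RInt_Chasles fx 0 t (t + delta)).
    unfold plus; simpl. ring. apply fx_exRInt; lra. apply fx_exRInt; lra. }
  rewrite E1. apply is_RInt_unique.
  assert (I1 : is_RInt gx t (t + delta) (Gx (t + delta) - Gx t)).
  { apply (is_RInt_derive Gx gx). intros x hx. apply Gx_deriv.
    destruct hx as [_ hx]. rewrite Rmax_right in hx by lra. lra.
    intros x hx. apply gx_cont. destruct hx as [_ hx]. rewrite Rmax_right in hx by lra. lra. }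
  assert (I2 : is_RInt rx t (t + delta) (RInt rx t (t+delta))).
  { apply (RInt_correct rx). apply (@ex_RInt_continuous R_CompleteNormedModule). intros z hz. apply rx_cont.
    destruct hz as [_ hz]. rewrite Rmax_right in hz by lra. lra. }
  assert (I3 := is_RInt_plus _ _ _ _ _ _ I1 I2).
  eapply is_RInt_ext; [|exact I3]. intros x hx. unfold plus; simpl. unfold gx, rx, fx. 
  unfold uu. unfold Rdiv. ring. Qed.

Lemma Vy_split t : t < T0 -> Vy t = Gy (t + delta) - Gy t + RInt ry t (t + delta).
Proof. intro h. unfold T0 in h. assert (dp := delta_pos).
  assert (E1 : Vy t = RInt fy t (t + delta)).
  { unfold Vy, Py. fold fy. rewrite <- (RInt_Chasles fy 0 t (t + delta)).
    unfold plus; simpl. ring. apply fy_exRInt; lra. apply fy_exRInt; lra. }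
  rewrite E1. apply is_RInt_unique.
  assert (I1 : is_RInt gy t (t + delta) (Gy (t + delta) - Gy t)).
  { apply (is_RInt_derive Gy gy). intros x hx. apply Gy_deriv.
    destruct hx as [_ hx]. rewrite Rmax_right in hx by lra. lra.
    intros x hx. apply gy_cont. destruct hx as [_ hx]. rewrite Rmax_right in hx by lra. lra. }
  assert (I2 : is_RInt ry t (t + delta) (RInt ry t (t+delta))).
  { apply (RInt_correct ry). apply (@ex_RInt_continuous R_CompleteNormedModule). intros z hz. apply ry_cont.
    destruct hz as [_ hz]. rewrite Rmax_right in hz by lra. lra. }
  assert (I3 := is_RInt_plus _ _ _ _ _ _ I1 I2).
  eapply is_RInt_ext; [|exact I3]. intros x hx. unfold plus; simpl. unfold gy, ry, fy. 
  unfold uu. unfold Rdiv. ring. Qed.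

Lemma Rint_rx_bound t : t < T0 -> Rabs (RInt rx t (t + delta)) <= delta * (105 * vv t ^ 9).
Proof. intro h. unfold T0 in h. assert (dp := delta_pos).
  assert (I2 : is_RInt rx t (t + delta) (RInt rx t (t+delta))).
  { apply (RInt_correct rx). apply (@ex_RInt_continuous R_CompleteNormedModule). intros z hz. apply rx_cont.
    destruct hz as [_ hz]. rewrite Rmax_right in hz by lra. lra. }
  assert (B := norm_RInt_le_const rx t (t + delta) (RInt rx t (t+delta)) (105 * vv t ^ 9) ltac:(lra)).
  replace (delta * (105 * vv t ^ 9)) with ((t + delta - t) * (105 * vv t ^ 9)) by ring. apply B; auto.
  intros x hx. unfold norm; simpl. unfold abs; simpl. unfold rx. 
  rewrite Rabs_mult, Rabs_mult. rewrite (Rabs_right 105) by lra.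
  assert (hu := uu_pos x ltac:(lra)). rewrite (Rabs_right (uu x ^ 9)) by (left; apply pow_lt; lra).
  assert (hc := COS_bound x). assert (Rabs (cos x) <= 1) by (apply Rabs_le; lra).
  assert (hm : uu x <= vv t) by (apply uu_mono; lra).
  assert (uu x ^ 9 <= vv t ^ 9) by (apply pow_incr; lra).
  assert (0 <= uu x ^ 9) by (apply pow_le; lra).
  nra. Qed.
Lemma Rint_ry_bound t : t < T0 -> Rabs (RInt ry t (t + delta)) <= delta * (105 * vv t ^ 9).
Proof. intro h. unfold T0 in h. assert (dp := delta_pos).
  assert (I2 : is_RInt ry t (t + delta) (RInt ry t (t+delta))).
  { apply (RInt_correct ry). apply (@ex_RInt_continuous R_CompleteNormedModule). intros z hz. apply ry_cont.
    destruct hz as [_ hz]. rewrite Rmax_right in hz by lra. lra. }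
  assert (B := norm_RInt_le_const ry t (t + delta) (RInt ry t (t+delta)) (105 * vv t ^ 9) ltac:(lra)).
  replace (delta * (105 * vv t ^ 9)) with ((t + delta - t) * (105 * vv t ^ 9)) by ring. apply B; auto.
  intros x hx. unfold norm; simpl. unfold abs; simpl. unfold ry. 
  rewrite Rabs_mult, Rabs_mult. rewrite (Rabs_right 105) by lra.
  assert (hu := uu_pos x ltac:(lra)). rewrite (Rabs_right (uu x ^ 9)) by (left; apply pow_lt; lra).
  assert (hc := SIN_bound x). assert (Rabs (sin x) <= 1) by (apply Rabs_le; lra).
  assert (hm : uu x <= vv t) by (apply uu_mono; lra).
  assert (uu x ^ 9 <= vv t ^ 9) by (apply pow_incr; lra).
  assert (0 <= uu x ^ 9) by (apply pow_le; lra).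
  nra. Qed.


Definition rr t := vv t / uu t.
Definition Kh t := sd * kf t / uu t.
Definition al t := Af t / uu t.
Definition Ex t := RInt rx t (t + delta).
Definition Ey t := RInt ry t (t + delta).

Lemma T0_lt t : t < T0 -> t < /2.
Proof. unfold T0. assert (dp := delta_pos). lra. Qed.
Lemma vv_pos t : t < T0 -> 0 < vv t.
Proof. intro h. unfold vv, T0 in *. apply uu_pos. lra. Qed.

Lemma Kh_exact t : t < T0 -> Kh t = rr t - cd - sd * uu t ^ 2 + (- 3 * rr t ^ 5 + 3 * cd) * uu t ^ 4
   + 15 * sd * uu t ^ 6 + (Ex t * sin (t + delta) - Ey t * cos (t + delta)) / uu t.
Proof. intro h. assert (hu := uu_pos t (T0_lt t h)). assert (hs := sd_neq).
  unfold Kh, kf, kI. fold sd. rewrite (Vx_split t h), (Vy_split t h). fold (Ex t) (Ey t).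
  unfold Gx, Gy. fold (vv t). unfold rr.
  assert (h1 := trig1 t). assert (h2 := trig2 t). assert (h3 := trig3 (t + delta)).
  apply (lc1 _ _ _ _ ((vv t - 3 * vv t ^ 5) / uu t) h3).
  apply (lc1 _ _ _ _ (- (uu t - 3 * uu t ^ 5) / uu t) h2).
  apply (lc1 _ _ _ _ (- (uu t ^ 3 - 15 * uu t ^ 7) / uu t) h1).
  field. split; lra. Qed.

Lemma al_exact t : t < T0 -> al t = 1 + (rr t ^ 3 - cd) * uu t ^ 2 / sd - 3 * uu t ^ 4
   - 15 * (rr t ^ 7 - cd) * uu t ^ 6 / sd + (Ex t * cos (t + delta) + Ey t * sin (t + delta)) / (sd * uu t).
Proof. intro h. assert (hu := uu_pos t (T0_lt t h)). assert (hs := sd_neq).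
  unfold al, Af. rewrite (Vx_split t h), (Vy_split t h). fold (Ex t) (Ey t).
  unfold Gx, Gy. fold (vv t). unfold rr.
  assert (h1 := trig1 t). assert (h2 := trig2 t). assert (h3 := trig3 (t + delta)).
  apply (lc1 _ _ _ _ ((vv t ^ 3 - 15 * vv t ^ 7) / (sd * uu t)) h3).
  apply (lc1 _ _ _ _ (- (uu t ^ 3 - 15 * uu t ^ 7) / (sd * uu t)) h2).
  apply (lc1 _ _ _ _ ((uu t - 3 * uu t ^ 5) / (sd * uu t)) h1).
  field. split; lra. Qed.


Definition eK t := (Ex t * sin (t + delta) - Ey t * cos (t + delta)) / (uu t * Hh t ^ 4).
Definition eA t := (Ex t * cos (t + delta) + Ey t * sin (t + delta)) / (sd * uu t * Hh t ^ 4).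

Lemma Kh_H t : t < T0 -> Kh t = rr t + 1/2 - Hh t + (-4 * rr t ^ 5 - 2) * Hh t ^ 2 + 20 * Hh t ^ 3
  + Hh t ^ 4 * eK t.
Proof. intro h. rewrite (Kh_exact t h). assert (hu := uu_pos t (T0_lt t h)). assert (hs := sd_neq).
  assert (hH := Hh_pos t (T0_lt t h)). unfold eK. rewrite cd_val.
  unfold Hh in *. assert (h2 := sd2).
  apply (lc1 _ _ _ _ ((4 * rr t ^ 5 + 2) * uu t ^ 4 - 20 * sd * uu t ^ 6) h2).
  field. split; lra. Qed.

Lemma al_H t : t < T0 -> al t = 1 + 4/3 * (rr t ^ 3 + 1/2) * Hh t - 4 * Hh t ^ 2
   - 80/3 * (rr t ^ 7 + 1/2) * Hh t ^ 3 + Hh t ^ 4 * eA t.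
Proof. intro h. rewrite (al_exact t h). assert (hu := uu_pos t (T0_lt t h)). assert (hs := sd_neq).
  assert (hH := Hh_pos t (T0_lt t h)). unfold eA. rewrite cd_val.
  unfold Hh in *. assert (h2 := sd2).
  apply (lc1 _ _ _ _ (- (4 / (3 * sd)) * (rr t ^ 3 + 1/2) * uu t ^ 2 + 4 * uu t ^ 4
       + 80 / (3 * sd) * (rr t ^ 7 + 1/2) * uu t ^ 6 * (sd * sd + 3/4)) h2).
  field. split; lra. Qed.


Lemma Bnd_le f g T : Bnd g -> (forall t, t < T -> Rabs (f t) <= g t) -> Bnd f.
Proof. intros [M [T1 H1]] E. exists M, (Rmin T1 T). intros t ht.
  assert (t < T1) by (eapply Rlt_le_trans; [apply ht| apply Rmin_l]).
  assert (t < T) by (eapply Rlt_le_trans; [apply ht| apply Rmin_r]).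
  eapply Rle_trans. apply E; auto. specialize (H1 t H). apply Rabs_le_between in H1. lra. Qed.

Lemma Bnd_div_lb f g c T : Bnd f -> 0 < c -> (forall t, t < T -> c <= g t) -> Bnd (fun t => f t / g t).
Proof. intros [M [T1 H1]] hc E. exists (M / c), (Rmin T1 T). intros t ht.
  assert (t < T1) by (eapply Rlt_le_trans; [apply ht| apply Rmin_l]).
  assert (t < T) by (eapply Rlt_le_trans; [apply ht| apply Rmin_r]).
  specialize (H1 t H). specialize (E t H0). assert (0 <= M) by (eapply Rle_trans; [apply Rabs_pos|apply H1]).
  unfold Rdiv. rewrite Rabs_mult, Rabs_inv, (Rabs_right (g t)) by lra.
  apply Rmult_le_compat; auto using Rabs_pos. left; apply Rinv_0_lt_compat; lra.
  apply Rinv_le_contravar; lra. Qed.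

Definition Tr := - 4 * delta.
Lemma Tr_T0 : Tr < T0.
Proof. unfold Tr, T0. assert (dp := delta_pos). lra. Qed.

Lemma vv_sq t : t < T0 -> vv t ^ 2 = / (1 - 2 * (t + delta)).
Proof. intro h. unfold vv, T0 in *. apply uu_sq. lra. Qed.

Lemma rr_sq t : t < T0 -> rr t ^ 2 * (1 - 2 * (delta * uu t ^ 2)) = 1.
Proof. intro h. assert (h' := T0_lt t h). assert (hu := uu_pos t h').
  unfold rr. replace ((vv t / uu t) ^ 2) with (vv t ^ 2 / uu t ^ 2) by (field; lra).
  rewrite vv_sq, uu_sq by auto. unfold T0 in h. field. lra. Qed.

Lemma rr_pos t : t < T0 -> 0 < rr t.
Proof. intro h. unfold rr. apply Rdiv_lt_0_compat. apply vv_pos; auto. apply uu_pos, T0_lt; auto. Qed.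

Lemma rr_le2 t : t < Tr -> rr t <= 2.
Proof. intro h. assert (hT := Tr_T0). assert (h0 : t < T0) by lra. assert (hr := rr_sq t h0).
  assert (hp := rr_pos t h0). rewrite uu_sq in hr by (apply T0_lt; auto). unfold Tr in h.
  assert (dp := delta_pos).
  assert (hx : 1 - 2 * (delta * / (1 - 2 * t)) >= 1/4).
  { assert (0 < 1 - 2*t) by lra. 
    assert (delta * / (1 - 2 * t) <= 3/8).
    { apply Rmult_le_reg_r with (1 - 2*t). lra. rewrite Rmult_assoc, Rinv_l by lra. lra. }
    lra. }
  nra. Qed.

Lemma rr_ge1 t : t < T0 -> 1 <= rr t.
Proof. intro h. assert (hr := rr_sq t h). assert (hp := rr_pos t h).
  assert (hu := uu_pos t (T0_lt t h)). assert (dp := delta_pos).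
  assert (0 < delta * uu t ^ 2) by (apply Rmult_lt_0_compat; auto; apply pow_lt; auto).
  nra. Qed.

Lemma Bnd_rr : Bnd rr.
Proof. exists 2, Tr. intros t ht. assert (hT := Tr_T0). rewrite Rabs_right.
  apply rr_le2; auto. left; apply rr_pos; lra. Qed.

Lemma eK_le t : t < Tr -> Rabs (eK t) <= 210 * delta / sd ^ 4 * rr t ^ 9.
Proof. intro h. assert (hT := Tr_T0). assert (h0 : t < T0) by lra.
  assert (hu := uu_pos t (T0_lt t h0)). assert (hs := sd_pos). assert (dp := delta_pos).
  assert (b1 := Rint_rx_bound t h0). assert (b2 := Rint_ry_bound t h0). fold (Ex t) in b1. fold (Ey t) in b2.
  assert (hn : Rabs (Ex t * sin (t + delta) - Ey t * cos (t + delta)) <= 210 * delta * vv t ^ 9).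
  { eapply Rle_trans. apply Rabs_triang. rewrite Rabs_Ropp, !Rabs_mult.
    assert (Rabs (sin (t + delta)) <= 1) by (apply Rabs_le; apply SIN_bound).
    assert (Rabs (cos (t + delta)) <= 1) by (apply Rabs_le; apply COS_bound).
    assert (0 <= Rabs (Ex t)) by apply Rabs_pos. assert (0 <= Rabs (Ey t)) by apply Rabs_pos. nra. }
  unfold eK. assert (hD : uu t * Hh t ^ 4 = sd ^ 4 * uu t ^ 9) by (unfold Hh; ring).
  rewrite hD. assert (hD2 : 0 < sd ^ 4 * uu t ^ 9) by (apply Rmult_lt_0_compat; apply pow_lt; auto).
  unfold Rdiv at 1. rewrite Rabs_mult, Rabs_inv, (Rabs_right (sd ^ 4 * uu t ^ 9)) by lra.
  apply Rle_trans with (210 * delta * vv t ^ 9 * / (sd ^ 4 * uu t ^ 9)).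
  apply Rmult_le_compat_r. left; apply Rinv_0_lt_compat; auto. auto.
  right. unfold rr. field. split; lra. Qed.

Lemma eA_le t : t < Tr -> Rabs (eA t) <= 210 * delta / sd ^ 5 * rr t ^ 9.
Proof. intro h. assert (hT := Tr_T0). assert (h0 : t < T0) by lra.
  assert (hu := uu_pos t (T0_lt t h0)). assert (hs := sd_pos). assert (dp := delta_pos).
  assert (b1 := Rint_rx_bound t h0). assert (b2 := Rint_ry_bound t h0). fold (Ex t) in b1. fold (Ey t) in b2.
  assert (hn : Rabs (Ex t * cos (t + delta) + Ey t * sin (t + delta)) <= 210 * delta * vv t ^ 9).
  { eapply Rle_trans. apply Rabs_triang. rewrite !Rabs_mult.
    assert (Rabs (sin (t + delta)) <= 1) by (apply Rabs_le; apply SIN_bound).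
    assert (Rabs (cos (t + delta)) <= 1) by (apply Rabs_le; apply COS_bound).
    assert (0 <= Rabs (Ex t)) by apply Rabs_pos. assert (0 <= Rabs (Ey t)) by apply Rabs_pos. nra. }
  unfold eA. assert (hD : sd * uu t * Hh t ^ 4 = sd ^ 5 * uu t ^ 9) by (unfold Hh; ring).
  rewrite hD. assert (hD2 : 0 < sd ^ 5 * uu t ^ 9) by (apply Rmult_lt_0_compat; apply pow_lt; auto).
  unfold Rdiv at 1. rewrite Rabs_mult, Rabs_inv, (Rabs_right (sd ^ 5 * uu t ^ 9)) by lra.
  apply Rle_trans with (210 * delta * vv t ^ 9 * / (sd ^ 5 * uu t ^ 9)).
  apply Rmult_le_compat_r. left; apply Rinv_0_lt_compat; auto. auto.
  right. unfold rr. field. split; lra. Qed.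

Lemma Bnd_eK : Bnd eK.
Proof. assert (B := Bnd_rr). apply (Bnd_le eK (fun t => 210 * delta / sd ^ 4 * rr t ^ 9) Tr).
  bnd. apply eK_le. Qed.
Lemma Bnd_eA : Bnd eA.
Proof. assert (B := Bnd_rr). apply (Bnd_le eA (fun t => 210 * delta / sd ^ 5 * rr t ^ 9) Tr).
  bnd. apply eA_le. Qed.

Definition PP := delta / sd.
Definition qq t := 1 + PP * Hh t + 3/2 * PP^2 * Hh t ^ 2 + 5/2 * PP^3 * Hh t ^ 3.
Definition er t := PP ^ 4 * (35/4 + 7 * (PP * Hh t) + 35/4 * (PP * Hh t) ^ 2 + 25/2 * (PP * Hh t) ^ 3)
   / ((1 - 2 * (PP * Hh t)) * (rr t + qq t)).

Lemma E4_rr : E4 rr 1 PP (3/2 * PP ^ 2) (5/2 * PP ^ 3).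
Proof. exists er. split.
  - assert (B := Bnd_rr). apply (Bnd_div_lb _ _ 1 (Rmin Tr 0)). bnd.
    lra. intros t ht. assert (t < Tr) by (eapply Rlt_le_trans; [apply ht| apply Rmin_l]).
    assert (t < 0) by (eapply Rlt_le_trans; [apply ht| apply Rmin_r]).
    assert (hT := Tr_T0). assert (hx : PP * Hh t = delta * uu t ^ 2) by (unfold PP, Hh; field; apply sd_neq).
    assert (hr1 := rr_ge1 t ltac:(lra)). assert (hH := Hh_pos t ltac:(lra)).
    assert (0 < PP) by (unfold PP; apply Rdiv_lt_0_compat; [apply delta_pos|apply sd_pos]).
    assert (hq : 1 <= qq t). { unfold qq. assert (0 < PP * Hh t) by (apply Rmult_lt_0_compat; auto).
      assert (0 <= PP^2 * Hh t ^ 2) by (apply Rmult_le_pos; apply pow_le; lra).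
      assert (0 <= PP^3 * Hh t ^ 3) by (apply Rmult_le_pos; apply pow_le; lra). lra. }
    assert (hsm : PP * Hh t <= 1/4).
    { rewrite hx. rewrite uu_sq by lra. unfold Tr in *. assert (dp := delta_pos).
      apply Rmult_le_reg_r with (1 - 2*t). lra. rewrite Rmult_assoc, Rinv_l by lra. lra. }
    nra.
  - exists T0. intros t ht. assert (hx : PP * Hh t = delta * uu t ^ 2) by (unfold PP, Hh; field; apply sd_neq).
    assert (hr := rr_sq t ht). rewrite <- hx in hr. assert (hr1 := rr_ge1 t ht).
    assert (hH := Hh_pos t (T0_lt t ht)).
    assert (hq : 0 < qq t). { unfold qq. assert (0 < PP) by (unfold PP; apply Rdiv_lt_0_compat; [apply delta_pos|apply sd_pos]).
      assert (0 < PP * Hh t) by (apply Rmult_lt_0_compat; auto).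
      assert (0 <= PP^2 * Hh t ^ 2) by (apply Rmult_le_pos; apply pow_le; lra).
      assert (0 <= PP^3 * Hh t ^ 3) by (apply Rmult_le_pos; apply pow_le; lra). lra. }
    assert (h12 : 1 - 2 * (PP * Hh t) <> 0). { intro hc. rewrite hc in hr. lra. }
    unfold er. set (x := PP * Hh t) in *. fold (qq t).
    assert (hW : 1 - qq t ^ 2 * (1 - 2 * x) = x ^ 4 * (35 / 4 + 7 * x + 35 / 4 * x ^ 2 + 25 / 2 * x ^ 3)).
    { unfold qq. fold x. unfold x. field. }
    assert (hD : (rr t - qq t) * ((1 - 2 * x) * (rr t + qq t)) = x ^ 4 * (35 / 4 + 7 * x + 35 / 4 * x ^ 2 + 25 / 2 * x ^ 3)).
    { transitivity (rr t ^ 2 * (1 - 2 * x) - qq t ^ 2 * (1 - 2 * x)). ring. rewrite hr. exact hW. }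
    assert (hD2 : (1 - 2 * x) * (rr t + qq t) <> 0) by (apply Rmult_integral_contrapositive; split; lra).
    assert (hrq : rr t = qq t + x ^ 4 * (35 / 4 + 7 * x + 35 / 4 * x ^ 2 + 25 / 2 * x ^ 3) / ((1 - 2 * x) * (rr t + qq t))).
    { rewrite <- hD. field. split; lra. }
    rewrite hrq at 1. unfold x. unfold qq. field. split; [|exact h12]. unfold qq in hq. lra.
    Qed.


Definition r2 t := rr t * rr t.
Lemma E4_r2 : E4 r2 ((1)) ((2)*PP) ((4)*PP^2) ((8)*PP^3).
Proof. pose proof E4_rr. unfold r2. e4. Qed.
Definition r3 t := r2 t * rr t.
Lemma E4_r3 : E4 r3 ((1)) ((3)*PP) ((15/2)*PP^2) ((35/2)*PP^3).
Proof. pose proof E4_rr. pose proof E4_r2. unfold r3. e4. Qed.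
Definition r5 t := r3 t * r2 t.
Lemma E4_r5 : E4 r5 ((1)) ((5)*PP) ((35/2)*PP^2) ((105/2)*PP^3).
Proof. pose proof E4_r3. pose proof E4_r2. unfold r5. e4. Qed.
Definition r7 t := r5 t * r2 t.
Lemma E4_r7 : E4 r7 ((1)) ((7)*PP) ((63/2)*PP^2) ((231/2)*PP^3).
Proof. pose proof E4_r5. pose proof E4_r2. unfold r7. e4. Qed.
Definition Kp t := rr t + 1/2 - Hh t + (-4 * r5 t - 2) * (Hh t * Hh t) + 20 * (Hh t * Hh t * Hh t).
Lemma E4_Kp : E4 Kp ((3/2)) ((-1) + (1)*PP) ((-6) + (3/2)*PP^2) ((20) + (-20)*PP + (5/2)*PP^3).
Proof. pose proof E4_rr. pose proof E4_r5. unfold Kp. e4. Qed.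
Lemma E4_Kh : E4 Kh ((3/2)) ((-1) + (1)*PP) ((-6) + (3/2)*PP^2) ((20) + (-20)*PP + (5/2)*PP^3).
Proof. apply (E4_perturb Kp Kh eK _ _ _ _ T0 E4_Kp Bnd_eK). intros t ht. rewrite (Kh_H t ht). unfold Kp, r5, r3, r2. field. Qed.
Definition alp t := 1 + 4/3 * (r3 t + 1/2) * Hh t - 4 * (Hh t * Hh t) - 80/3 * (r7 t + 1/2) * (Hh t * Hh t * Hh t).
Lemma E4_alp : E4 alp ((1)) ((2)) ((-4) + (4)*PP) ((-40) + (10)*PP^2).
Proof. pose proof E4_r3. pose proof E4_r7. unfold alp. e4. Qed.
Lemma E4_al : E4 al ((1)) ((2)) ((-4) + (4)*PP) ((-40) + (10)*PP^2).
Proof. apply (E4_perturb alp al eA _ _ _ _ T0 E4_alp Bnd_eA). intros t ht. rewrite (al_H t ht). unfold alp, r7, r5, r3, r2. field. Qed.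
Definition pp t := al t - 1.
Lemma E4_pp : E4 pp 0 ((2)) ((-4) + (4)*PP) ((-40) + (10)*PP^2).
Proof. pose proof E4_al. unfold pp. e4. Qed.
Definition a1h t := rr t + 1/2 - Kh t.
Lemma E4_a1h : E4 a1h 0 ((1)) ((6)) ((-20) + (20)*PP).
Proof. pose proof E4_rr. pose proof E4_Kh. unfold a1h. e4. Qed.
Definition k2h t := a1h t - Hh t.
Lemma E4_k2h : E4 k2h 0 0 ((6)) ((-20) + (20)*PP).
Proof. pose proof E4_a1h. unfold k2h. e4. Qed.
Definition a2h t := 4/3 * ((r3 t + 1/2) * Hh t) - pp t.
Lemma E4_a2h : E4 a2h 0 0 ((4)) ((40)).
Proof. pose proof E4_r3. pose proof E4_pp. unfold a2h. e4. Qed.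
Definition St t := al t * al t + 4/3 * (Kh t * Kh t).
Lemma E4_St : E4 St ((4)) ((4)*PP) ((-80/3) + (16/3)*PP + (22/3)*PP^2) ((-80)*PP + (16)*PP^2 + (14)*PP^3).
Proof. pose proof E4_al. pose proof E4_Kh. unfold St. e4. Qed.
Definition Ct t := al t * (al t + pp t) - 4/3 * (Kh t * (a1h t - Kh t)).
Lemma E4_Ct : E4 Ct ((4)) ((4)*PP) ((-112/3) + (8)*PP + (22/3)*PP^2) ((-112)*PP + (24)*PP^2 + (14)*PP^3).
Proof. pose proof E4_al. pose proof E4_pp. pose proof E4_Kh. pose proof E4_a1h. unfold Ct. e4. Qed.
Definition Sp t := 2 * (al t * a1h t + Kh t * pp t).
Lemma E4_Sp : E4 Sp 0 ((8)) ((16)*PP) ((-160) + (32)*PP + (44)*PP^2).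
Proof. pose proof E4_al. pose proof E4_a1h. pose proof E4_Kh. pose proof E4_pp. unfold Sp. e4. Qed.
Definition Cp t := al t * k2h t - Kh t * a2h t + Sp t.
Lemma E4_Cp : E4 Cp 0 ((8)) ((16)*PP) ((-224) + (48)*PP + (44)*PP^2).
Proof. pose proof E4_al. pose proof E4_k2h. pose proof E4_Kh. pose proof E4_a2h. pose proof E4_Sp. unfold Cp. e4. Qed.
Definition Dh t := 3/2 * (Sp t * Ct t) - St t * Cp t.
Lemma E4_Dh : E4 Dh 0 ((16)) ((48)*PP) ((-896/3) + (160/3)*PP + (448/3)*PP^2).
Proof. pose proof E4_Sp. pose proof E4_Ct. pose proof E4_St. pose proof E4_Cp. unfold Dh. e4. Qed.
Definition Nh t := Hh t * (St t * St t * St t) - 4 * Dh t.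
Lemma E4_Nh : E4 Nh 0 0 0 ((-256/3) + (128/3)*PP + (-160/3)*PP^2).
Proof. pose proof E4_St. pose proof E4_Dh. unfold Nh. e4. Qed.


Lemma inv_sd2 : / (sd * sd) = 4/3.
Proof. rewrite sd2. field. Qed.

Ltac fs := field; repeat split; try lra; try apply sd_neq.
Ltac pre := let h := fresh "H" in intro h; pose proof (uu_pos _ (T0_lt _ h)); pose proof sd_neq.

Lemma c_kf t : t < T0 -> kf t = uu t * Kh t / sd.
Proof. pre. unfold Kh. fs. Qed.
Lemma c_Af t : t < T0 -> Af t = uu t * al t.
Proof. pre. unfold al. fs. Qed.
Lemma c_kd1 t : t < T0 -> kd1 t = uu t * pp t.
Proof. pre. unfold kd1, pp. rewrite (c_Af t H). ring. Qed.
Lemma c_Ad1 t : t < T0 -> Ad1 t = uu t / sd * a1h t.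
Proof. pre. unfold Ad1, a1h. rewrite (c_kf t H), cd_val. unfold rr. fs. Qed.
Lemma c_kd2 t : t < T0 -> kd2 t = uu t / sd * k2h t.
Proof. pre. unfold kd2, k2h. rewrite (c_Ad1 t H). unfold Hh. fs. Qed.
Lemma c_Ad2 t : t < T0 -> Ad2 t = uu t * a2h t.
Proof. pre. unfold Ad2, a2h. rewrite (c_kd1 t H), cd_val. unfold r3, r2, rr. rewrite <- inv_sd2. unfold Hh.
  fs. Qed.

Lemma c_Sf t : t < T0 -> Sf t = uu t ^ 2 * St t.
Proof. pre. unfold Sf, St. rewrite (c_kf t H), (c_Af t H). rewrite <- inv_sd2. fs. Qed.
Lemma c_Cf t : t < T0 -> Cf t = uu t ^ 2 * Ct t.
Proof. pre. unfold Cf, Ct, QQ2, PP2. rewrite (c_kf t H), (c_Af t H), (c_kd1 t H), (c_Ad1 t H). fold (pp t). rewrite <- inv_sd2. fs. Qed.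
Lemma c_Sd t : t < T0 -> Sd t = uu t ^ 2 / sd * Sp t.
Proof. pre. unfold Sd, Sp. rewrite (c_kf t H), (c_Af t H), (c_kd1 t H), (c_Ad1 t H). fs. Qed.
Lemma c_Cd t : t < T0 -> Cd t = uu t ^ 2 / sd * Cp t.
Proof. pre. unfold Cd, Cp. rewrite (c_Sd t H), (c_kf t H), (c_Af t H), (c_kd2 t H), (c_Ad2 t H). fs. Qed.
Lemma c_Df t : t < T0 -> Df t = uu t ^ 4 / sd * Dh t.
Proof. pre. unfold Df, Dh. rewrite (c_Sd t H), (c_Cd t H), (c_Sf t H), (c_Cf t H). fs. Qed.


Lemma ln_bound y : Rabs y <= 1/2 -> Rabs (ln (1 + y) - y) <= 2 * y ^ 2.
Proof. intro hy. apply Rabs_le_between in hy.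
  assert (hp : 0 < 1 + y) by lra.
  assert (up : ln (1 + y) <= y).
  { assert (h := exp_ineq1_le (ln (1 + y))). rewrite exp_ln in h by lra. lra. }
  assert (lo : 1 - / (1 + y) <= ln (1 + y)).
  { assert (h := exp_ineq1_le (ln (/ (1 + y)))). rewrite exp_ln in h by (apply Rinv_0_lt_compat; lra).
    rewrite ln_Rinv in h by lra. lra. }
  assert (e : 1 - / (1 + y) = y - y ^ 2 / (1 + y)) by (field; lra).
  assert (hq : y ^ 2 / (1 + y) <= 2 * y ^ 2).
  { apply Rmult_le_reg_r with (1 + y). lra. unfold Rdiv. rewrite Rmult_assoc, Rinv_l by lra.
    assert (0 <= y ^ 2) by (apply pow2_ge_0). nra. }
  apply Rabs_le. split. 2: { assert (0 <= y ^ 2) by (apply pow2_ge_0). lra. } lra. Qed.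

Lemma ln_est (X a b K h : R) : 0 < a -> 0 <= K -> 0 <= h -> h <= 1 ->
  (Rabs (b/a) + K/a) * h <= 1/2 -> Rabs (X - (a + b*h)) <= K * h^2 ->
  0 < X /\ Rabs (ln X - (ln a + b/a*h)) <= (2*(Rabs (b/a) + K/a)^2 + K/a) * h^2.
Proof. intros ha hK hh0 hh1 hs hX.
  set (y := X / a - 1).
  assert (hXy : X = a * (1 + y)) by (unfold y; field; lra).
  assert (hy1 : Rabs (y - b/a*h) <= K/a * h^2).
  { replace (y - b/a*h) with ((X - (a + b*h)) / a) by (unfold y; field; lra).
    unfold Rdiv. rewrite Rabs_mult, (Rabs_right (/a)) by (left; apply Rinv_0_lt_compat; lra).
    apply Rle_trans with (K * h^2 * / a). apply Rmult_le_compat_r. left; apply Rinv_0_lt_compat; lra. auto.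
    right; field; lra. }
  assert (hK' : 0 <= K / a) by (apply Rdiv_le_0_compat; lra).
  assert (hy2 : Rabs y <= (Rabs (b/a) + K/a) * h).
  { replace y with ((y - b/a*h) + b/a*h) by ring. eapply Rle_trans. apply Rabs_triang.
    rewrite Rabs_mult, (Rabs_right h) by lra. 
    assert (h^2 <= h) by nra. assert (K / a * h ^ 2 <= K/a * h) by (apply Rmult_le_compat_l; lra). nra. }
  assert (hy3 : Rabs y <= 1/2) by lra.
  assert (hy4 := proj1 (Rabs_le_between _ _) hy3).
  split. rewrite hXy. apply Rmult_lt_0_compat; lra.
  rewrite hXy, ln_mult by lra.
  replace (ln a + ln (1 + y) - (ln a + b / a * h)) with ((ln (1 + y) - y) + (y - b/a*h)) by ring.
  eapply Rle_trans. apply Rabs_triang. assert (hl := ln_bound y hy3).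
  assert (y ^ 2 <= ((Rabs (b/a) + K/a) * h) ^ 2).
  { assert (e : y ^ 2 = Rabs y ^ 2) by (rewrite RPow_abs; rewrite Rabs_right; [reflexivity| apply Rle_ge, pow2_ge_0]).
    rewrite e. apply pow_incr. split. apply Rabs_pos. auto. }
  assert (hh : ((Rabs (b/a) + K/a) * h) ^ 2 = (Rabs (b/a) + K/a) ^ 2 * h^2) by ring.
  nra. Qed.

Lemma y_est (N D n3 K3 K4 h : R) : 0 < h -> h <= 1 -> 0 <= K3 -> 0 <= K4 -> K3 * h <= 8 ->
  Rabs (D - 16 * h) <= K3 * h ^ 2 -> Rabs (N - n3 * h ^ 3) <= K4 * h ^ 4 ->
  8 * h <= D /\ Rabs (N / (4 * D)) <= (Rabs n3 + K4) / 32 * h ^ 2 /\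
  Rabs (N / (4 * D) - n3 / 64 * h ^ 2) <= (16 * K4 + Rabs n3 * K3) / 512 * h ^ 3.
Proof. intros h0 h1 k3 k4 hk hD hN.
  apply Rabs_le_between in hD. 
  assert (hD8 : 8 * h <= D) by nra.
  assert (hDp : 0 < D) by lra.
  split; auto.
  assert (hNb : Rabs N <= (Rabs n3 + K4) * h ^ 3).
  { replace N with ((N - n3 * h^3) + n3 * h^3) by ring. eapply Rle_trans. apply Rabs_triang.
    rewrite Rabs_mult, (Rabs_right (h^3)) by (apply Rle_ge, pow_le; lra).
    assert (h^4 <= h^3) by (replace (h^4) with (h^3 * h) by ring; assert (0 <= h^3) by (apply pow_le; lra); nra).
    nra. }
  split.
  - unfold Rdiv. rewrite Rabs_mult, Rabs_inv, (Rabs_right (4 * D)) by lra.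
    apply Rle_trans with ((Rabs n3 + K4) * h ^ 3 * / (4 * (8 * h))).
    apply Rmult_le_compat; auto using Rabs_pos. left; apply Rinv_0_lt_compat; lra.
    apply Rinv_le_contravar; lra. right. field. lra.
  - replace (N / (4 * D) - n3 / 64 * h ^ 2) with ((16 * (N - n3 * h ^ 3) - n3 * h ^ 2 * (D - 16 * h)) / (64 * D))
      by (field; lra).
    unfold Rdiv. rewrite Rabs_mult, Rabs_inv, (Rabs_right (64 * D)) by lra.
    assert (hD2 : Rabs (D - 16 * h) <= K3 * h ^ 2) by (apply Rabs_le; lra).
    assert (hnum : Rabs (16 * (N - n3 * h ^ 3) - n3 * h ^ 2 * (D - 16 * h)) <= (16 * K4 + Rabs n3 * K3) * h ^ 4).
    { eapply Rle_trans. apply Rabs_triang. rewrite Rabs_Ropp, !Rabs_mult.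
      rewrite (Rabs_right 16) by lra. rewrite (Rabs_right (h^2)) by (apply Rle_ge, pow_le; lra).
      assert (0 <= Rabs n3) by apply Rabs_pos. assert (0 <= h^2) by (apply pow_le; lra).
      assert (Rabs n3 * h^2 * Rabs (D - 16 * h) <= Rabs n3 * h^2 * (K3 * h^2)) by (apply Rmult_le_compat_l; nra).
      replace (h^4) with (h^2 * h^2) by ring. nra. }
    apply Rle_trans with ((16 * K4 + Rabs n3 * K3) * h ^ 4 * / (64 * (8 * h))).
    apply Rmult_le_compat; auto using Rabs_pos. left; apply Rinv_0_lt_compat; lra.
    apply Rinv_le_contravar; lra. right. field. lra. Qed.

Definition Ev (P : R -> Prop) := exists T, forall t, t < T -> P t.
Lemma Ev_and (P Q : R -> Prop) : Ev P -> Ev Q -> Ev (fun t => P t /\ Q t).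
Proof. intros [T1 H1] [T2 H2]. exists (Rmin T1 T2). intros t ht.
  assert (t < T1) by (eapply Rlt_le_trans; [apply ht| apply Rmin_l]).
  assert (t < T2) by (eapply Rlt_le_trans; [apply ht| apply Rmin_r]). auto. Qed.
Lemma Ev_lt T : Ev (fun t => t < T).
Proof. exists T. auto. Qed.
Lemma Ev_Hsmall eps : 0 < eps -> Ev (fun t => Hh t < eps).
Proof. intro he. exists (Rmin 0 (- / eps)). intros t ht.
  assert (t < 0) by (eapply Rlt_le_trans; [apply ht| apply Rmin_l]).
  assert (t < - / eps) by (eapply Rlt_le_trans; [apply ht| apply Rmin_r]).
  rewrite Hh_eq by lra. assert (hs1 := sd_lt1). assert (hs2 := sd_pos).
  assert (0 < / eps) by (apply Rinv_0_lt_compat; lra).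
  apply Rmult_lt_reg_r with (1 - 2*t). lra. unfold Rdiv. rewrite Rmult_assoc, Rinv_l by lra.
  assert (eps * (1 - 2*t) > eps * (2 * / eps)) by (apply Rmult_gt_compat_l; lra).
  assert (eps * (2 * / eps) = 2) by (field; lra). lra. Qed.
Lemma Ev_H01 : Ev (fun t => 0 < Hh t /\ Hh t <= 1).
Proof. exists 0. intros t ht. split. apply Hh_pos; lra. apply Hh_le1; auto. Qed.

Lemma E4_first Q a b c d : E4 Q a b c d -> exists K, 0 <= K /\
  Ev (fun t => Rabs (Q t - (a + b * Hh t)) <= K * Hh t ^ 2).
Proof. intros [e [[M [T1 HM]] [T2 HE]]].
  assert (hM : 0 <= M) by (specialize (HM (T1 - 1) ltac:(lra)); eapply Rle_trans; [apply Rabs_pos|apply HM]).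
  exists (Rabs c + Rabs d + M). split. assert (0 <= Rabs c) by apply Rabs_pos. assert (0 <= Rabs d) by apply Rabs_pos. lra.
  destruct (Ev_and _ _ (Ev_and _ _ (Ev_lt T1) (Ev_lt T2)) Ev_H01) as [T H].
  exists T. intros t ht. destruct (H t ht) as [[h1 h2] [h3 h4]].
  rewrite (HE t h2). set (h := Hh t) in *. specialize (HM t h1).
  replace (a + b * h + c * h ^ 2 + d * h ^ 3 + h ^ 4 * e t - (a + b * h)) with (h^2 * (c + d * h + h^2 * e t)) by ring.
  rewrite Rabs_mult, (Rabs_right (h^2)) by (apply Rle_ge, pow_le; lra). rewrite Rmult_comm.
  apply Rmult_le_compat_r. apply pow_le; lra.
  eapply Rle_trans. apply Rabs_triang. eapply Rle_trans. apply Rplus_le_compat_r. apply Rabs_triang.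
  rewrite !Rabs_mult, (Rabs_right h) by lra. rewrite (Rabs_right (h^2)) by (apply Rle_ge, pow_le; lra).
  assert (h^2 <= 1) by nra. assert (0 <= Rabs d) by apply Rabs_pos. assert (0 <= h^2) by nra.
  assert (Rabs d * h <= Rabs d) by nra. assert (h^2 * Rabs (e t) <= M) by nra. lra. Qed.

Lemma E4_third Q d : E4 Q 0 0 0 d -> exists K, 0 <= K /\
  Ev (fun t => Rabs (Q t - d * Hh t ^ 3) <= K * Hh t ^ 4).
Proof. intros [e [[M [T1 HM]] [T2 HE]]].
  assert (hM : 0 <= M) by (specialize (HM (T1 - 1) ltac:(lra)); eapply Rle_trans; [apply Rabs_pos|apply HM]).
  exists M. split. auto.
  destruct (Ev_and _ _ (Ev_and _ _ (Ev_lt T1) (Ev_lt T2)) Ev_H01) as [T H].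
  exists T. intros t ht. destruct (H t ht) as [[h1 h2] [h3 h4]].
  rewrite (HE t h2). specialize (HM t h1).
  replace (0 + 0 * Hh t + 0 * Hh t ^ 2 + d * Hh t ^ 3 + Hh t ^ 4 * e t - d * Hh t ^ 3) with (Hh t ^ 4 * e t) by ring.
  rewrite Rabs_mult, (Rabs_right (Hh t ^ 4)) by (apply Rle_ge, pow_le; lra). rewrite Rmult_comm.
  apply Rmult_le_compat_r. apply pow_le; lra. auto. Qed.

Definition n3 := ((-256/3) + (128/3)*PP + (-160/3)*PP^2).
Definition yv t := Nh t / (4 * Dh t).

Lemma PP_pos : 0 < PP.
Proof. unfold PP. apply Rdiv_lt_0_compat. apply delta_pos. apply sd_pos. Qed.

Lemma n3_neg : n3 < 0.
Proof. unfold n3. assert (h := PP_pos). nra. Qed.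

Lemma main_est : exists K, 0 <= K /\ Ev (fun t => t < Tr /\ 0 < Hh t /\ Hh t <= 1 /\
   0 < St t /\ 0 < Ct t /\ 8 * Hh t <= Dh t /\
   Rabs (ln (St t) - (ln 4 + PP * Hh t)) <= K * Hh t ^ 2 /\
   Rabs (ln (Ct t) - (ln 4 + PP * Hh t)) <= K * Hh t ^ 2 /\
   Rabs (yv t) <= K * Hh t ^ 2 /\ Rabs (yv t - n3 / 64 * Hh t ^ 2) <= K * Hh t ^ 3 /\
   Rabs (yv t) <= 1/2).
Proof.
  destruct (E4_first _ _ _ _ _ E4_St) as [K1 [k1 Ev1]].
  destruct (E4_first _ _ _ _ _ E4_Ct) as [K2 [k2 Ev2]].
  destruct (E4_first _ _ _ _ _ E4_Dh) as [K3 [k3 Ev3]].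
  destruct (E4_third _ _ E4_Nh) as [K4 [k4 Ev4]].
  assert (hP := PP_pos). assert (hn := Rabs_pos n3). fold n3 in Ev4.
  set (S := 1 + PP + K1 + K2 + K3 + Rabs n3 + K4).
  assert (hS : 1 <= S) by (unfold S; lra).
  set (c1 := 2 * (Rabs (4 * PP / 4) + K1 / 4) ^ 2 + K1 / 4).
  set (c2 := 2 * (Rabs (4 * PP / 4) + K2 / 4) ^ 2 + K2 / 4).
  set (c3 := (Rabs n3 + K4) / 32).
  set (c4 := (16 * K4 + Rabs n3 * K3) / 512).
  assert (hc1 : 0 <= c1) by (unfold c1; assert (0 <= (Rabs (4 * PP / 4) + K1 / 4) ^ 2) by apply pow2_ge_0; lra).
  assert (hc2 : 0 <= c2) by (unfold c2; assert (0 <= (Rabs (4 * PP / 4) + K2 / 4) ^ 2) by apply pow2_ge_0; lra).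
  assert (hc3 : 0 <= c3) by (unfold c3; lra).
  assert (hc4 : 0 <= c4) by (unfold c4; assert (0 <= Rabs n3 * K3) by nra; lra).
  exists (c1 + c2 + c3 + c4). split. lra.
  assert (hAbs : Rabs (4 * PP / 4) = PP) by (rewrite Rabs_right; [field| lra]).
  assert (hSe : 0 < / (16 * S)) by (apply Rinv_0_lt_compat; lra).
  destruct (Ev_and _ _ (Ev_and _ _ (Ev_and _ _ Ev1 Ev2) (Ev_and _ _ Ev3 Ev4))
     (Ev_and _ _ (Ev_and _ _ Ev_H01 (Ev_Hsmall _ hSe)) (Ev_lt Tr))) as [T HT].
  exists T. intros t ht. destruct (HT t ht) as [[[E1 E2] [E3 E4']] [[[h0 h1] hsm] hTr]].
  set (h := Hh t) in *.
  assert (hsm2 : h * (16 * S) < 1).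
  { apply Rmult_lt_reg_r with (/ (16 * S)). auto. rewrite Rmult_assoc, Rinv_r by lra. lra. }
  assert (hb1 : (Rabs (4 * PP / 4) + K1 / 4) * h <= 1/2) by (rewrite hAbs; unfold S in hsm2; nra).
  assert (hb2 : (Rabs (4 * PP / 4) + K2 / 4) * h <= 1/2) by (rewrite hAbs; unfold S in hsm2; nra).
  destruct (ln_est (St t) 4 (4 * PP) K1 h ltac:(lra) k1 ltac:(lra) h1 hb1 E1) as [St_pos L1].
  destruct (ln_est (Ct t) 4 (4 * PP) K2 h ltac:(lra) k2 ltac:(lra) h1 hb2 E2) as [Ct_pos L2].
  replace (4 * PP / 4 * h) with (PP * h) in L1, L2 by field. fold c1 in L1. fold c2 in L2.
  assert (hk3 : K3 * h <= 8) by (unfold S in hsm2; nra).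
  replace (0 + 16 * h) with (16 * h) in E3 by ring.
  destruct (y_est (Nh t) (Dh t) n3 K3 K4 h h0 h1 k3 k4 hk3 E3 E4') as [D8 [Y1 Y2]].
  fold (yv t) in Y1, Y2. fold c3 in Y1. fold c4 in Y2.
  assert (hh2 : 0 <= h ^ 2) by apply pow2_ge_0. assert (hh3 : 0 <= h ^ 3) by (apply pow_le; lra).
  assert (hh23 : h ^ 2 <= h) by nra.
  repeat split; auto; try nra.
  apply Rle_trans with (c3 * h ^ 2). auto. unfold c3. unfold S in hsm2.
  assert ((Rabs n3 + K4) * h <= 1) by nra. nra. Qed.


Definition Good (K : R) (t : R) := t < Tr /\ 0 < Hh t /\ Hh t <= 1 /\
   0 < St t /\ 0 < Ct t /\ 8 * Hh t <= Dh t /\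
   Rabs (ln (St t) - (ln 4 + PP * Hh t)) <= K * Hh t ^ 2 /\
   Rabs (ln (Ct t) - (ln 4 + PP * Hh t)) <= K * Hh t ^ 2 /\
   Rabs (yv t) <= K * Hh t ^ 2 /\ Rabs (yv t - n3 / 64 * Hh t ^ 2) <= K * Hh t ^ 3 /\
   Rabs (yv t) <= 1/2.

Lemma facts K T t : (forall y, y < T -> Good K y) -> t < T ->
  LCG_defined t /\ LCGx t = ln (uu t) + 3/2 * ln (St t) - ln (Ct t) /\
  LCGx t + LCGy t = ln 4 + ln (1 + yv t).
Proof. intros HG ht.
  set (T1 := Rmin T T0).
  assert (hTr := Tr_T0).
  assert (hT1 : T1 <= T0) by apply Rmin_r.
  assert (hG : forall y, y < T1 -> y < T0 /\ Good K y).
  { intros y hy. assert (y < T) by (eapply Rlt_le_trans; [apply hy| apply Rmin_l]).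
    split; [|auto]. destruct (HG y H). lra. }
  assert (hpos : forall y, y < T1 -> 0 < Cf y /\ 0 < Sf y).
  { intros y hy. destruct (hG y hy) as [hy0 [_ [_ [_ [hS [hC _]]]]]].
    assert (hu := uu_pos y (T0_lt y hy0)). rewrite c_Cf, c_Sf by auto.
    split; apply Rmult_lt_0_compat; auto; apply pow_lt; auto. }
  assert (ht1 : t < T1). { destruct (HG t ht). apply Rmin_glb_lt; lra. }
  destruct (hG t ht1) as [ht0 [_ [hH [_ [hS [hC [hD [_ [_ [_ [_ hy]]]]]]]]]]].
  assert (hu := uu_pos t (T0_lt t ht0)). assert (hsd := sd_pos).
  assert (eS := c_Sf t ht0). assert (eC := c_Cf t ht0). assert (eD := c_Df t ht0).
  assert (hDp : 0 < Dh t) by lra.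
  assert (hSf : 0 < Sf t) by (rewrite eS; apply Rmult_lt_0_compat; auto; apply pow_lt; auto).
  assert (hCf : 0 < Cf t) by (rewrite eC; apply Rmult_lt_0_compat; auto; apply pow_lt; auto).
  assert (hDf : 0 < Df t) by (rewrite eD; apply Rmult_lt_0_compat; auto; apply Rdiv_lt_0_compat; auto; apply pow_lt; auto).
  assert (hq : 0 < sqrt (Sf t)) by (apply sqrt_lt_R0; auto).
  assert (hq2 := sqrt_sqrt (Sf t) ltac:(lra)).
  assert (dR := rho_deriv T1 t hT1 hpos ht1).
  assert (rE := rho_eq t ht0). rewrite Rabs_right in rE by lra.
  assert (hrho : 0 < rhoI t) by (rewrite rE; apply Rdiv_lt_0_compat; auto; apply pow_lt; auto).
  split; [|split].
  - unfold LCG_defined. split. exact ht0. split. rewrite speed_eq; auto.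
    split. rewrite cross_eq; lra. rewrite dR. apply Rgt_not_eq. apply Rdiv_lt_0_compat.
    apply Rmult_lt_0_compat; auto. apply pow_lt; auto.
  - unfold LCGx. rewrite rE. 
    assert (hsS : sqrt (Sf t) = uu t * sqrt (St t)).
    { rewrite eS, sqrt_mult. rewrite sqrt_pow2 by lra. reflexivity. apply pow2_ge_0. lra. }
    assert (hqS : 0 < sqrt (St t)) by (apply sqrt_lt_R0; auto).
    rewrite hsS, eC.
    replace ((uu t * sqrt (St t)) ^ 3 / (uu t ^ 2 * Ct t)) with (uu t * (sqrt (St t) ^ 3 * / Ct t)) by (field; lra).
    rewrite ln_mult, ln_mult, ln_Rinv, ln_pow; auto; try (apply Rinv_0_lt_compat; auto); try (apply pow_lt; auto).
    2: { apply Rmult_lt_0_compat. apply pow_lt; auto. apply Rinv_0_lt_compat; auto. }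
    assert (hl : ln (St t) = 2 * ln (sqrt (St t))).
    { rewrite <- (sqrt_sqrt (St t)) at 1 by lra. rewrite ln_mult by auto. ring. }
    rewrite hl. simpl INR. field.
  - unfold LCGx, LCGy. rewrite speed_eq by auto. rewrite dR.
    replace (sqrt (Sf t) / (sqrt (Sf t) * Df t / Cf t ^ 2)) with (Cf t ^ 2 / Df t) by (field; repeat split; lra).
    rewrite Rabs_right by (apply Rle_ge; apply Rdiv_le_0_compat; [apply pow2_ge_0| lra]).
    assert (0 < Cf t ^ 2 / Df t) by (apply Rdiv_lt_0_compat; auto; apply pow_lt; auto).
    rewrite <- ln_mult by (auto; apply Rmult_lt_0_compat; auto).
    apply Rabs_le_between in hy.
    rewrite <- ln_mult by lra. f_equal.
    rewrite rE. 
    replace (sqrt (Sf t) ^ 3 / Cf t * (sqrt (Sf t) ^ 3 / Cf t * (Cf t ^ 2 / Df t))) with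
      ((sqrt (Sf t) * sqrt (Sf t)) ^ 3 / Df t) by (field; lra).
    rewrite hq2, eS, eD. unfold yv. unfold Nh. unfold Hh. field. repeat split; lra. Qed.


Lemma slope_alg (ux ux' s s' c c' f f' H H' K P L L4 : R) :
  0 < H -> 0 <= H' -> H' <= H -> 0 <= K -> 5 * K * H <= 1/2 -> 0 <= P ->
  H <= ux - ux' ->
  Rabs (s - (L + P * H)) <= K * H ^ 2 -> Rabs (s' - (L + P * H')) <= K * H' ^ 2 ->
  Rabs (c - (L + P * H)) <= K * H ^ 2 -> Rabs (c' - (L + P * H')) <= K * H' ^ 2 ->
  Rabs f <= 2 * K * H ^ 2 -> Rabs f' <= 2 * K * H' ^ 2 ->
  Rabs (((L4 + f - (ux + 3/2 * s - c)) - (L4 + f' - (ux' + 3/2 * s' - c'))) /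
        ((ux + 3/2 * s - c) - (ux' + 3/2 * s' - c')) - -1) <= 8 * K * H.
Proof. intros h0 h0' hHH hK hs hP hu e1 e2 e3 e4 e5 e6.
  apply Rabs_le_between in e1. apply Rabs_le_between in e2. apply Rabs_le_between in e3.
  apply Rabs_le_between in e4. apply Rabs_le_between in e5. apply Rabs_le_between in e6.
  assert (hH2 : H' ^ 2 <= H ^ 2) by (apply pow_incr; lra).
  assert (hK2 : K * H' ^ 2 <= K * H ^ 2) by (apply Rmult_le_compat_l; lra).
  set (dx := (ux + 3/2 * s - c) - (ux' + 3/2 * s' - c')).
  assert (hdx : H / 2 <= dx).
  { unfold dx. assert (P * (H - H') >= 0) by nra. assert (K * H ^ 2 <= H / 10) by nra. lra. }
  assert (hdf : Rabs (f - f') <= 4 * K * H ^ 2) by (apply Rabs_le; lra).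
  replace ((L4 + f - (ux + 3/2 * s - c)) - (L4 + f' - (ux' + 3/2 * s' - c'))) with ((f - f') - dx) by (unfold dx; ring).
  replace (((f - f') - dx) / dx - -1) with ((f - f') / dx) by (field; lra).
  unfold Rdiv. rewrite Rabs_mult, Rabs_inv, (Rabs_right dx) by lra.
  apply Rle_trans with (4 * K * H ^ 2 * / (H / 2)).
  apply Rmult_le_compat; auto using Rabs_pos. left; apply Rinv_0_lt_compat; lra.
  apply Rinv_le_contravar; lra. right. field. lra. Qed.

Lemma ln_ge x : 0 < x -> 1 - / x <= ln x.
Proof. intro h. assert (h1 := exp_ineq1_le (ln (/ x))). rewrite exp_ln in h1 by (apply Rinv_0_lt_compat; lra).
  rewrite ln_Rinv in h1 by lra. lra. Qed.

Lemma ln_uu t : t < /2 -> ln (uu t) = - (ln (1 - 2 * t)) / 2.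
Proof. intro h. unfold uu. rewrite ln_Rinv by (apply sqrt_lt_R0; lra).
  assert (e : ln (1 - 2*t) = 2 * ln (sqrt (1 - 2*t))).
  { rewrite <- (sqrt_sqrt (1 - 2*t)) at 1 by lra. rewrite ln_mult by (apply sqrt_lt_R0; lra). ring. }
  rewrite e. field. Qed.

Lemma uu_diff t : t < - PI -> Hh t <= ln (uu t) - ln (uu (t - PI)).
Proof. intro h. assert (hP := PI_RGT_0). assert (hP2 := PI2_3_2).
  rewrite !ln_uu by lra. rewrite Hh_eq by lra.
  set (a := 1 - 2 * t). replace (1 - 2 * (t - PI)) with (a + 2 * PI) by (unfold a; ring).
  assert (ha : 2 * PI <= a) by (unfold a; lra).
  assert (e : - ln a / 2 - - ln (a + 2 * PI) / 2 = ln ((a + 2 * PI) / a) / 2).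
  { assert (e0 : ln ((a + 2 * PI) / a) = ln (a + 2*PI) - ln a).
    { unfold Rdiv. rewrite ln_mult, ln_Rinv; try lra. apply Rinv_0_lt_compat; lra. }
    rewrite e0. field. }
  rewrite e. assert (hl := ln_ge ((a + 2 * PI) / a) ltac:(apply Rdiv_lt_0_compat; lra)).
  replace (/ ((a + 2 * PI) / a)) with (a / (a + 2 * PI)) in hl by (field; lra).
  assert (hs1 := sd_lt1). assert (hs2 := sd_pos).
  assert (1 - a / (a + 2 * PI) = 2 * PI / (a + 2 * PI)) by (field; lra).
  assert (sd / a <= PI / (2 * a)).
  { apply Rmult_le_reg_r with (2 * a). lra. field_simplify; lra. }
  assert (PI / (2 * a) <= PI / (a + 2 * PI)).
  { apply Rmult_le_reg_r with (a * (a + 2 * PI)). nra. field_simplify; try lra. nra. }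
  lra. Qed.

Lemma Hh_mono t : t < /2 -> Hh (t - PI) <= Hh t.
Proof. intro h. assert (hP := PI_RGT_0). rewrite !Hh_eq by lra. assert (hs := sd_pos).
  unfold Rdiv. apply Rmult_le_compat_l. lra. apply Rinv_le_contravar; lra. Qed.

Lemma lnf_bound y : Rabs y <= 1/2 -> Rabs (ln (1 + y)) <= 2 * Rabs y.
Proof. intro h. assert (h1 := ln_bound y h).
  replace (ln (1 + y)) with ((ln (1 + y) - y) + y) by ring. eapply Rle_trans. apply Rabs_triang.
  assert (y ^ 2 = Rabs y * Rabs y) by (rewrite <- Rabs_mult; rewrite Rabs_right; [ring| apply Rle_ge; nra]).
  assert (0 <= Rabs y) by apply Rabs_pos. nra. Qed.

Lemma good_ev : exists K, 0 <= K /\ exists T, forall y, y < T -> Good K y.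
Proof. destruct main_est as [K [hK [T HT]]]. exists K. split; auto. exists T. exact HT. Qed.

Lemma lim_part : is_lim LCG_slope m_infty (-1).
Proof. apply is_lim_spec. intro eps. simpl.
  destruct good_ev as [K [hK [T HG]]].
  assert (he := cond_pos eps).
  assert (hE : 0 < Rmin (/ (10 * K + 1)) (eps / (8 * K + 1))).
  { apply Rmin_glb_lt. apply Rinv_0_lt_compat; lra. apply Rdiv_lt_0_compat; lra. }
  destruct (Ev_and _ _ (Ev_and _ _ (Ev_lt T) (Ev_lt (- PI))) (Ev_Hsmall _ hE)) as [M HM].
  exists M. intros t ht. destruct (HM t ht) as [[h1 h2] h3].
  assert (hP := PI_RGT_0).
  destruct (facts K T t HG h1) as [_ [gx gs]].
  destruct (facts K T (t - PI) HG ltac:(lra)) as [_ [gx' gs']].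
  destruct (HG t h1) as [_ [hH0 [_ [_ [_ [_ [l1 [l2 [y1 [_ y3]]]]]]]]]].
  destruct (HG (t - PI) ltac:(lra)) as [_ [hH0' [_ [_ [_ [_ [l1' [l2' [y1' [_ y3']]]]]]]]]].
  assert (hmono := Hh_mono t ltac:(lra)).
  assert (hud := uu_diff t h2).
  assert (f1 : Rabs (ln (1 + yv t)) <= 2 * K * Hh t ^ 2).
  { eapply Rle_trans. apply lnf_bound; auto. lra. }
  assert (f2 : Rabs (ln (1 + yv (t - PI))) <= 2 * K * Hh (t - PI) ^ 2).
  { eapply Rle_trans. apply lnf_bound; auto. lra. }
  assert (hsm1 : Hh t <= / (10 * K + 1)) by (eapply Rlt_le; eapply Rlt_le_trans; [apply h3|apply Rmin_l]).
  assert (hsm2 : Hh t < eps / (8 * K + 1)) by (eapply Rlt_le_trans; [apply h3|apply Rmin_r]).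
  assert (h5 : 5 * K * Hh t <= 1/2).
  { apply Rmult_le_compat_l with (r := 10 * K + 1) in hsm1; [|lra]. rewrite Rinv_r in hsm1 by lra. nra. }
  assert (h8 : 8 * K * Hh t < eps).
  { apply Rmult_lt_compat_l with (r := 8 * K + 1) in hsm2; [|lra].
    replace ((8 * K + 1) * (eps / (8 * K + 1))) with (pos eps) in hsm2 by (field; lra). nra. }
  unfold LCG_slope.
  replace (LCGy t) with (ln 4 + ln (1 + yv t) - LCGx t) by lra.
  replace (LCGy (t - PI)) with (ln 4 + ln (1 + yv (t - PI)) - LCGx (t - PI)) by lra.
  rewrite gx, gx'.
  eapply Rle_lt_trans; [| apply h8].
  apply (slope_alg _ _ _ _ _ _ _ _ (Hh t) (Hh (t - PI)) K PP (ln 4) (ln 4)); auto; try lra.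
  left; apply PP_pos. Qed.

Lemma dx_alg (ux ux' s s' c c' H H' K P L : R) :
  0 < H -> 0 <= H' -> H' <= H -> 0 <= K -> 5 * K * H <= 1/2 -> 0 <= P ->
  H <= ux - ux' ->
  Rabs (s - (L + P * H)) <= K * H ^ 2 -> Rabs (s' - (L + P * H')) <= K * H' ^ 2 ->
  Rabs (c - (L + P * H)) <= K * H ^ 2 -> Rabs (c' - (L + P * H')) <= K * H' ^ 2 ->
  0 < (ux + 3/2 * s - c) - (ux' + 3/2 * s' - c').
Proof. intros h0 h0' hHH hK hs hP hu e1 e2 e3 e4.
  apply Rabs_le_between in e1. apply Rabs_le_between in e2. apply Rabs_le_between in e3.
  apply Rabs_le_between in e4.
  assert (hH2 : H' ^ 2 <= H ^ 2) by (apply pow_incr; lra).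
  assert (hK2 : K * H' ^ 2 <= K * H ^ 2) by (apply Rmult_le_compat_l; lra).
  assert (P * (H - H') >= 0) by nra. assert (K * H ^ 2 <= H / 10) by nra. lra. Qed.

Lemma Ev_pick P : Ev P -> exists t, P t.
Proof. intros [T H]. exists (T - 1). apply H. lra. Qed.

Theorem mainTheorem3 :
  (~ exists a c : R, forall t : R, LCG_defined t -> LCGy t = a * LCGx t + c)
  /\ is_lim LCG_slope m_infty (-1).
Proof.
  split; [| exact lim_part].
  intros [a [c Hac]].
  destruct good_ev as [K [hK [T HG]]].
  assert (hP := PI_RGT_0).
  assert (hE : 0 < / (10 * K + 1)) by (apply Rinv_0_lt_compat; lra).
  destruct (Ev_and _ _ (Ev_and _ _ (Ev_lt T) (Ev_lt (- PI))) (Ev_Hsmall _ hE)) as [T' HT'].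
  assert (Hsl : forall t, t < T' -> LCGx t + LCGy t = c + (a + 1) * LCGx t /\ LCG_slope t = a).
  { intros t ht. destruct (HT' t ht) as [[h1 h2] h3].
    destruct (facts K T t HG h1) as [d1 [gx gs]].
    destruct (facts K T (t - PI) HG ltac:(lra)) as [d2 [gx' gs']].
    destruct (HG t h1) as [_ [hH0 [_ [_ [_ [_ [l1 [l2 [y1 [_ y3]]]]]]]]]].
    destruct (HG (t - PI) ltac:(lra)) as [_ [hH0' [_ [_ [_ [_ [l1' [l2' [y1' [_ y3']]]]]]]]]].
    assert (hmono := Hh_mono t ltac:(lra)).
    assert (hud := uu_diff t h2).
    assert (h5 : 5 * K * Hh t <= 1/2).
    { assert (h3' : Hh t <= / (10 * K + 1)) by lra.
      apply Rmult_le_compat_l with (r := 10 * K + 1) in h3'; [|lra]. rewrite Rinv_r in h3' by lra. nra. }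
    assert (hdx := dx_alg _ _ _ _ _ _ (Hh t) (Hh (t - PI)) K PP (ln 4) hH0 ltac:(lra) hmono hK h5
        ltac:(left; apply PP_pos) hud l1 l1' l2 l2').
    rewrite <- gx, <- gx' in hdx.
    split. rewrite (Hac t d1). ring.
    unfold LCG_slope. rewrite (Hac t d1), (Hac (t - PI) d2). field. lra. }
  assert (ha : a = -1).
  { destruct (Req_dec a (-1)) as [e|ne]; auto. exfalso.
    assert (hp : 0 < Rabs (a + 1)) by (apply Rabs_pos_lt; lra).
    assert (L := proj2 (is_lim_spec LCG_slope m_infty (-1)) lim_part (mkposreal _ hp)).
    simpl in L. destruct L as [M HM].
    set (t := Rmin M T' - 1).
    assert (t < M) by (unfold t; assert (h := Rmin_l M T'); lra).
    assert (t < T') by (unfold t; assert (h := Rmin_r M T'); lra).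
    specialize (HM t H). rewrite (proj2 (Hsl t H0)) in HM. replace (a - -1) with (a + 1) in HM by ring. lra. }
  subst a.
  assert (hf : forall t, t < T' -> ln (1 + yv t) = c - ln 4).
  { intros t ht. destruct (HT' t ht) as [[h1 h2] h3].
    destruct (facts K T t HG h1) as [d1 [gx gs]]. destruct (Hsl t ht) as [e _]. lra. }
  assert (hc : c - ln 4 = 0).
  { destruct (Req_dec (c - ln 4) 0) as [e|ne]; auto. exfalso.
    assert (hp : 0 < Rabs (c - ln 4)) by (apply Rabs_pos_lt; lra).
    assert (hE2 : 0 < Rmin 1 (Rabs (c - ln 4) / (2 * K + 1))) by (apply Rmin_glb_lt; [lra| apply Rdiv_lt_0_compat; lra]).
    destruct (Ev_pick _ (Ev_and _ _ (Ev_lt T') (Ev_Hsmall _ hE2))) as [t [ht hs]].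
    destruct (HT' t ht) as [[h1 h2] h3].
    destruct (HG t h1) as [_ [hH0 [hH1 [_ [_ [_ [l1 [l2 [y1 [_ y3]]]]]]]]]].
    assert (hb := lnf_bound _ y3). rewrite (hf t ht) in hb.
    assert (hs1 : Hh t < 1) by (eapply Rlt_le_trans; [apply hs| apply Rmin_l]).
    assert (hs2 : Hh t < Rabs (c - ln 4) / (2 * K + 1)) by (eapply Rlt_le_trans; [apply hs| apply Rmin_r]).
    apply Rmult_lt_compat_l with (r := 2 * K + 1) in hs2; [|lra].
    replace ((2 * K + 1) * (Rabs (c - ln 4) / (2 * K + 1))) with (Rabs (c - ln 4)) in hs2 by (field; lra).
    assert (Hh t ^ 2 <= Hh t) by nra. nra. }
  assert (hy0 : forall t, t < T' -> yv t = 0).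
  { intros t ht. assert (e := hf t ht). rewrite hc in e.
    destruct (HT' t ht) as [[h1 h2] h3]. destruct (HG t h1) as [_ [_ [_ [_ [_ [_ [_ [_ [_ [_ y3]]]]]]]]]].
    apply Rabs_le_between in y3.
    assert (e2 := exp_ln (1 + yv t) ltac:(lra)). rewrite e, exp_0 in e2. lra. }
  assert (hn := n3_neg).
  assert (hE3 : 0 < - n3 / (64 * K + 1)) by (apply Rdiv_lt_0_compat; lra).
  destruct (Ev_pick _ (Ev_and _ _ (Ev_lt T') (Ev_Hsmall _ hE3))) as [t [ht hs]].
  destruct (HT' t ht) as [[h1 h2] h3].
  destruct (HG t h1) as [_ [hH0 [hH1 [_ [_ [_ [_ [_ [_ [y2 _]]]]]]]]]].
  rewrite (hy0 t ht) in y2. 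
  replace (0 - n3 / 64 * Hh t ^ 2) with (- n3 / 64 * Hh t ^ 2) in y2 by field.
  rewrite Rabs_right in y2 by (apply Rle_ge; assert (0 <= Hh t ^ 2) by apply pow2_ge_0; 
     apply Rmult_le_pos; lra).
  apply Rmult_lt_compat_l with (r := 64 * K + 1) in hs; [|lra].
  replace ((64 * K + 1) * (- n3 / (64 * K + 1))) with (- n3) in hs by (field; lra).
  assert (hH2 : 0 < Hh t ^ 2) by (apply pow_lt; lra).
  assert (- n3 / 64 <= K * Hh t).
  { apply Rmult_le_reg_r with (Hh t ^ 2). auto. replace (K * Hh t * Hh t ^ 2) with (K * Hh t ^ 3) by ring. lra. }
  nra.
Qed.
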